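(* Let $0\le q<N$ and let $[\beta]$ be a nonzero element of $H^{q+1}(E_0)$. Then $[\beta]$ is a second class obstructed element if and only if there exist an integer $n\ge1$ and a class $c\in H^q(\mathcal{E}_0^\bullet\otimes_{\mathcal{O}}\mathcal{O}/\mathfrak{m}_0^n)$ such that $o^q_{n,n-1}(c)=\rho^{q+1}_{n-1}([\beta])$.
   Context: Setting. Let $B$ be a one-dimensional complex manifold (a disc) with holomorphic coordinate $t$ centred at a point $0\in B$; write $\mathcal{O}=\mathcal{O}_{B,0}$ and $\mathfrak{m}_0=t\mathcal{O}$ for its maximal ideal. Let $(E^\bullet,d^\bullet)$: $0\to E^0\xrightarrow{d^0}E^1\xrightarrow{d^1}\cdots\xrightarrow{d^{N-1}}E^N\to 0$ be a bounded complex of holomorphic vector bundles on $B$ whose differentials are $\mathcal{O}_B$-linear holomorphic bundle maps with $d^{q+1}\circ d^q=0$. For $s\in B$, $E_s^\bullet$ denotes the fibre complex (with differentials $d^q_s$) and $H^q(E_s)=\ker d^q_s/\mathrm{im}\, d^{q-1}_s$. Let $\mathcal{E}_0^q$ be the stalk at $0$ of the sheaf of holomorphic sections of $E^q$; for a germ $s$, $s(0)$ is its value at $0$. For $n\ge1$, $\mathcal{E}_0^\bullet\otimes_{\mathcal{O}}\mathcal{O}/\mathfrak{m}_0^n$ is the induced truncated complex with cohomology $H^q(\mathcal{E}_0^\bullet\otimes_{\mathcal{O}}\mathcal{O}/\mathfrak{m}_0^n)$. Obstruction maps. $o_n^q:H^q(\mathcal{E}_0^\bullet\otimes\mathcal{O}/\mathfrak{m}_0^n)\to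 H^{q+1}(E_0)$ sends the class of $\tilde\alpha \bmod t^n$ (where $\tilde\alpha\in\mathcal{E}_0^q$ with $d^q\tilde\alpha\in t^n\mathcal{E}_0^{q+1}$) to the class of $(t^{-n}d^q\tilde\alpha)(0)$ (this is well defined). For $i\ge 0$, $\rho_i^q:H^q(E_0)\to H^q(\mathcal{E}_0^\bullet\otimes\mathcal{O}/\mathfrak{m}_0^{i+1})$ is $[\sigma]\mapsto[t^i\tilde\sigma \bmod t^{i+1}]$, where $\tilde\sigma$ is any germ with $\tilde\sigma(0)=\sigma$. For $0\le i\le n$ set $o^q_{n,i}=\rho_i^{q+1}\circ o_n^q$. Second class obstructed elements. A nonzero class $[\beta]\in H^{q+1}(E_0)$ is called a second class obstructed element if there exist an open neighbourhood $W$ of $0$ and a holomorphic section $\tilde\beta$ of $E^{q+1}$ over $W$ such that $d^{q+1}\tilde\beta=0$ on $W$, $\tilde\beta(0)$ represents $[\beta]$, and $\tilde\beta(s)\in\mathrm{im}(d^q_s:E^q_s\to E^{q+1}_s)$ for every $s\in W\setminus\{0\}$. *)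

(* Defs.v *)
(* complex numbers as R*R, holomorphic functions on discs as
   convergent power series, bundles trivialised. *)
From Stdlib Require Import Reals ClassicalEpsilon.
Open Scope R_scope.

Definition Cplx : Type := (R * R)%type.
Definition C0 : Cplx := (0, 0).
Definition C1 : Cplx := (1, 0).
Definition Cadd (z w : Cplx) : Cplx := (fst z + fst w, snd z + snd w).
Definition Copp (z : Cplx) : Cplx := (- fst z, - snd z).
Definition Csub (z w : Cplx) : Cplx := Cadd z (Copp w).
Definition Cmul (z w : Cplx) : Cplx :=
  (fst z * fst w - snd z * snd w, fst z * snd w + snd z * fst w).
Fixpoint Cpow (z : Cplx) (n : nat) : Cplx :=
  match n with O => C1 | S k => Cmul z (Cpow z k) end.
Definition Cnorm2 (z : Cplx) : R := fst z * fst z + snd z * snd z.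

Fixpoint csum (n : nat) (f : nat -> Cplx) : Cplx :=
  match n with O => C0 | S k => Cadd (csum k f) (f k) end.

(* a : nat -> Cplx is the coefficient sequence of sum_m a_m t^m *)
Definition ps_partial (a : nat -> Cplx) (z : Cplx) (n : nat) : Cplx :=
  csum (S n) (fun m => Cmul (a m) (Cpow z m)).
Definition ps_has_sum (a : nat -> Cplx) (z w : Cplx) : Prop :=
  Un_cv (fun n => fst (ps_partial a z n)) (fst w) /\
  Un_cv (fun n => snd (ps_partial a z n)) (snd w).
Definition ps_conv_on (a : nat -> Cplx) (rho : R) : Prop :=
  forall z, Cnorm2 z < rho * rho -> exists w, ps_has_sum a z w.
(* value of the series at z (its sum, when it converges) *)
Definition ps_eval (a : nat -> Cplx) (z : Cplx) : Cplx :=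
  epsilon (inhabits C0) (ps_has_sum a z).
(* germ of holomorphic function at 0 = power series with positive radius *)
Definition is_germ (a : nat -> Cplx) : Prop :=
  exists rho, 0 < rho /\ ps_conv_on a rho.

(* ---------- the complex E^. of (trivialised) bundles on B ----------
   B = open disc {|t| < RB}; E^k = B x C^(r k), r k = 0 for k > N;
   d k m i j = coefficient of t^m in entry (i,j) of d^k : E^k -> E^(k+1),
   i < r (k+1), j < r k.  Germ vectors: a m i = coeff. of t^m in component i. *)
Definition is_bounded_complex (N : nat) (RB : R) (r : nat -> nat)
    (d : nat -> nat -> nat -> nat -> Cplx) : Prop :=
  0 < RB /\
  (forall k, (N < k)%nat -> r k = O) /\
  (forall k i j, (i < r (S k))%nat -> (j < r k)%nat ->
      ps_conv_on (fun m => d k m i j) RB) /\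
  (* d^(k+1) o d^k = 0 at every point of B *)
  (forall k z, Cnorm2 z < RB * RB ->
    forall i l, (i < r (S (S k)))%nat -> (l < r k)%nat ->
      csum (r (S k)) (fun j => Cmul (ps_eval (fun m => d (S k) m i j) z)
                                    (ps_eval (fun m => d k m j l) z)) = C0).

(* fibre map d^k_s evaluated on a vector x, component i *)
Definition fibre_apply (r : nat -> nat) (d : nat -> nat -> nat -> nat -> Cplx)
    (k : nat) (s : Cplx) (x : nat -> Cplx) (i : nat) : Cplx :=
  csum (r k) (fun j => Cmul (ps_eval (fun m => d k m i j) s) (x j)).

(* fibre at 0: the value at 0 of a germ is its constant coefficient *)
Definition d0_apply (r : nat -> nat) (d : nat -> nat -> nat -> nat -> Cplx)
    (k : nat) (x : nat -> Cplx) (i : nat) : Cplx :=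
  csum (r k) (fun j => Cmul (d k O i j) (x j)).
Definition ker0 r d k (v : nat -> Cplx) : Prop :=
  forall i, (i < r (S k))%nat -> d0_apply r d k v i = C0.
Definition im0 r d k (v : nat -> Cplx) : Prop :=
  exists x : nat -> Cplx, forall i, (i < r (S k))%nat -> v i = d0_apply r d k x i.
(* [u] = [v] in H^(k+1)(E_0) *)
Definition H0_eq r d k (u v : nat -> Cplx) : Prop :=
  im0 r d k (fun i => Csub (u i) (v i)).

Definition is_germ_vec (rk : nat) (a : nat -> nat -> Cplx) : Prop :=
  forall i, (i < rk)%nat -> is_germ (fun m => a m i).
(* d^k applied to a germ vector (Cauchy product of series) *)
Definition dgerm (r : nat -> nat) (d : nat -> nat -> nat -> nat -> Cplx) (k : nat)
    (a : nat -> nat -> Cplx) : nat -> nat -> Cplx :=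
  fun m i => csum (S m) (fun l =>
               csum (r k) (fun j => Cmul (d k l i j) (a (m - l)%nat j))).

(* a mod t^n is a cocycle of E_0^. (x) O/m^n in degree k, i.e. d^k a in t^n E^(k+1) *)
Definition trunc_cocycle r d k n (a : nat -> nat -> Cplx) : Prop :=
  forall m i, (m < n)%nat -> (i < r (S k))%nat -> dgerm r d k a m i = C0.
(* [u mod t^n] = [v mod t^n] in H^(k+1)(E_0^. (x) O/m^n) *)
Definition Htrunc_eq r d k n (u v : nat -> nat -> Cplx) : Prop :=
  exists eta, is_germ_vec (r k) eta /\
    forall m i, (m < n)%nat -> (i < r (S k))%nat ->
      Csub (u m i) (v m i) = dgerm r d k eta m i.

(* o_n^k on representatives: class of (t^-n d^k a)(0) *)
Definition obs_rep r d k n (a : nat -> nat -> Cplx) : nat -> Cplx :=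
  fun i => dgerm r d k a n i.
(* rho_i on representatives: t^i * (constant germ sigma) *)
Definition rho_rep (i : nat) (sigma : nat -> Cplx) : nat -> nat -> Cplx :=
  fun m j => if Nat.eqb m i then sigma j else C0.
(* o_{n,i}^k = rho_i^(k+1) o o_n^k on representatives *)
Definition o_ni_rep r d k n i (a : nat -> nat -> Cplx) : nat -> nat -> Cplx :=
  rho_rep i (obs_rep r d k n a).

(* second class obstructed element (condition on a representative beta of the
   nonzero class [beta] in H^(q+1)(E_0)); W shrunk to a disc |s| < rho *)
Definition second_class_obstructed (RB : R) (r : nat -> nat)
    (d : nat -> nat -> nat -> nat -> Cplx) (q : nat) (beta : nat -> Cplx) : Prop :=
  exists rho, 0 < rho /\ rho <= RB /\
  exists bt : nat -> nat -> Cplx,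
    (forall i, (i < r (S q))%nat -> ps_conv_on (fun m => bt m i) rho) /\
    (forall s, Cnorm2 s < rho * rho ->
       forall i, (i < r (S (S q)))%nat ->
         fibre_apply r d (S q) s (fun j => ps_eval (fun m => bt m j) s) i = C0) /\
    (* bt(0) represents [beta] *)
    ker0 r d (S q) (fun j => bt O j) /\ H0_eq r d q (fun j => bt O j) beta /\
    (forall s, 0 < Cnorm2 s -> Cnorm2 s < rho * rho ->
       exists x : nat -> Cplx, forall i, (i < r (S q))%nat ->
         ps_eval (fun m => bt m i) s = fibre_apply r d q s x i).

(* Main.v *)
Require Import Defs.
From Stdlib Require Import Reals Lra Lia Psatz ClassicalEpsilon Classical FunctionalExtensionality Arith ProofIrrelevance PropExtensionality.
Open Scope R_scope.
Notation CC1 := Defs.C1.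

Ltac cdestr := repeat match goal with
  | z : Cplx |- _ => let a := fresh "a" in let b := fresh "b" in destruct z as [a b]
  | z : (R*R)%type |- _ => let a := fresh "a" in let b := fresh "b" in destruct z as [a b] end.
Ltac csolve := unfold Csub in *; unfold Cmul, Cadd, Copp, C0, CC1, Cnorm2 in *; cdestr; simpl in *;
  try (f_equal; ring).

Lemma Cpair_eq (z w : Cplx) : fst z = fst w -> snd z = snd w -> z = w.
Proof. destruct z, w; simpl; intros; subst; auto. Qed.

Lemma Cadd_comm z w : Cadd z w = Cadd w z. Proof. csolve. Qed.
Lemma Cadd_assoc z w u : Cadd z (Cadd w u) = Cadd (Cadd z w) u. Proof. csolve. Qed.
Lemma Cadd_0l z : Cadd C0 z = z. Proof. csolve. Qed.
Lemma Cadd_0r z : Cadd z C0 = z. Proof. csolve. Qed.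
Lemma Cmul_comm z w : Cmul z w = Cmul w z. Proof. csolve. Qed.
Lemma Cmul_assoc z w u : Cmul z (Cmul w u) = Cmul (Cmul z w) u. Proof. csolve. Qed.
Lemma Cmul_1l z : Cmul CC1 z = z. Proof. csolve. Qed.
Lemma Cmul_0l z : Cmul C0 z = C0. Proof. csolve. Qed.
Lemma Cmul_0r z : Cmul z C0 = C0. Proof. csolve. Qed.
Lemma Cmul_addl z w u : Cmul (Cadd z w) u = Cadd (Cmul z u) (Cmul w u). Proof. csolve. Qed.
Lemma Cmul_addr z w u : Cmul u (Cadd z w) = Cadd (Cmul u z) (Cmul u w). Proof. csolve. Qed.
Lemma Cadd_opp z : Cadd z (Copp z) = C0. Proof. csolve. Qed.

Lemma Cpow_add z m n : Cpow z (m + n) = Cmul (Cpow z m) (Cpow z n).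
Proof. induction m; simpl. now rewrite Cmul_1l. rewrite IHm. apply Cmul_assoc. Qed.

Lemma Cpow_real x m : Cpow (x, 0) m = (x ^ m, 0).
Proof. induction m; simpl. reflexivity. rewrite IHm. unfold Cmul; simpl. f_equal; ring. Qed.

Lemma csum_fst n f : fst (csum (S n) f) = sum_f_R0 (fun m => fst (f m)) n.
Proof. induction n; simpl in *. unfold C0; simpl; ring. rewrite <- IHn. simpl. reflexivity. Qed.
Lemma csum_snd n f : snd (csum (S n) f) = sum_f_R0 (fun m => snd (f m)) n.
Proof. induction n; simpl in *. unfold C0; simpl; ring. rewrite <- IHn. simpl. reflexivity. Qed.

Lemma csum_ext n f g : (forall m, (m < n)%nat -> f m = g m) -> csum n f = csum n g.
Proof. induction n; simpl; intros; auto. rewrite IHn, H; auto. Qed.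
Lemma csum_zero n f : (forall m, (m < n)%nat -> f m = C0) -> csum n f = C0.
Proof. induction n; simpl; intros; auto. rewrite IHn, H; auto. apply Cadd_0r. Qed.
Lemma csum_add n f g : csum n (fun m => Cadd (f m) (g m)) = Cadd (csum n f) (csum n g).
Proof. induction n; simpl. csolve. rewrite IHn. csolve. Qed.
Lemma csum_mull n f c : csum n (fun m => Cmul c (f m)) = Cmul c (csum n f).
Proof. induction n; simpl. csolve. rewrite IHn. csolve. Qed.

Definition Cabs (z : Cplx) : R := sqrt (Cnorm2 z).
Lemma Cnorm2_ge0 z : 0 <= Cnorm2 z. Proof. unfold Cnorm2; nra. Qed.
Lemma Cabs_ge0 z : 0 <= Cabs z. Proof. apply sqrt_pos. Qed.
Lemma Cnorm2_mul z w : Cnorm2 (Cmul z w) = Cnorm2 z * Cnorm2 w.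
Proof. csolve. ring. Qed.
Lemma Cabs_mul z w : Cabs (Cmul z w) = Cabs z * Cabs w.
Proof. unfold Cabs. rewrite Cnorm2_mul. apply sqrt_mult; apply Cnorm2_ge0. Qed.
Lemma Cabs_sq z : Cabs z * Cabs z = Cnorm2 z.
Proof. unfold Cabs. apply sqrt_sqrt, Cnorm2_ge0. Qed.
Lemma Cabs_fst z : Rabs (fst z) <= Cabs z.
Proof. unfold Cabs. rewrite <- sqrt_Rsqr_abs. apply sqrt_le_1_alt.
  unfold Rsqr, Cnorm2. nra. Qed.
Lemma Cabs_snd z : Rabs (snd z) <= Cabs z.
Proof. unfold Cabs. rewrite <- sqrt_Rsqr_abs. apply sqrt_le_1_alt.
  unfold Rsqr, Cnorm2. nra. Qed.
Lemma Cabs_le_comp z : Cabs z <= Rabs (fst z) + Rabs (snd z).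
Proof. unfold Cabs. apply Rsqr_incr_0_var. 2: generalize (Rabs_pos (fst z)) (Rabs_pos (snd z)); lra.
  rewrite Rsqr_sqrt by apply Cnorm2_ge0. unfold Rsqr, Cnorm2.
  generalize (Rabs_pos (fst z)) (Rabs_pos (snd z)). intros.
  assert (E1: fst z * fst z = Rabs (fst z) * Rabs (fst z)) by (rewrite <- Rabs_mult; symmetry; apply Rabs_pos_eq; nra).
  assert (E2: snd z * snd z = Rabs (snd z) * Rabs (snd z)) by (rewrite <- Rabs_mult; symmetry; apply Rabs_pos_eq; nra).
  rewrite E1, E2. nra. Qed.
Lemma Cabs_triangle z w : Cabs (Cadd z w) <= Cabs z + Cabs w.
Proof. apply Rsqr_incr_0_var. 2: generalize (Cabs_ge0 z) (Cabs_ge0 w); lra.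
  unfold Rsqr. rewrite Cabs_sq.
  replace ((Cabs z + Cabs w) * (Cabs z + Cabs w)) with (Cnorm2 z + Cnorm2 w + 2 * (Cabs z * Cabs w))
   by (rewrite <- (Cabs_sq z), <- (Cabs_sq w); ring).
  assert (H: fst z * fst w + snd z * snd w <= Cabs z * Cabs w).
  { unfold Cabs. rewrite <- sqrt_mult by apply Cnorm2_ge0.
    apply Rle_trans with (Rabs (fst z * fst w + snd z * snd w)). apply Rle_abs.
    rewrite <- sqrt_Rsqr_abs. apply sqrt_le_1_alt. unfold Rsqr, Cnorm2.
    generalize (pow2_ge_0 (fst z * snd w - snd z * fst w)). intro. nra. }
  unfold Cadd, Cnorm2 in *; simpl. nra. Qed.
Lemma Cabs_pow z m : Cabs (Cpow z m) = Cabs z ^ m.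
Proof. induction m; simpl. unfold Cabs, Cnorm2, CC1; simpl. replace (1*1+0*0) with 1 by ring. apply sqrt_1.
  rewrite Cabs_mul, IHm. reflexivity. Qed.
Lemma Cabs_opp z : Cabs (Copp z) = Cabs z.
Proof. unfold Cabs, Copp, Cnorm2; simpl. f_equal; ring. Qed.
Lemma Cabs_real x : Cabs (x, 0) = Rabs x.
Proof. unfold Cabs, Cnorm2; simpl. rewrite <- sqrt_Rsqr_abs. f_equal. unfold Rsqr; ring. Qed.
Lemma Cabs0 : Cabs C0 = 0.
Proof. unfold Cabs, Cnorm2, C0; simpl. replace (0*0+0*0) with 0 by ring. apply sqrt_0. Qed.
Lemma Cabs_eq0 z : Cabs z = 0 -> z = C0.
Proof. intro H. assert (Cnorm2 z = 0) by (rewrite <- Cabs_sq, H; ring).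
  unfold Cnorm2, C0 in *. destruct z; simpl in *. f_equal; nra. Qed.
Lemma Cabs_csum n f : Cabs (csum n f) <= sum_f_R0 (fun m => Cabs (f m)) (pred n) \/ n = O.
Proof. Abort.

Definition ser_has_sum (u : nat -> Cplx) (w : Cplx) : Prop :=
  Un_cv (fun n => fst (csum (S n) u)) (fst w) /\ Un_cv (fun n => snd (csum (S n) u)) (snd w).

Lemma ps_has_sum_ser a z w : ps_has_sum a z w <-> ser_has_sum (fun m => Cmul (a m) (Cpow z m)) w.
Proof. unfold ps_has_sum, ser_has_sum, ps_partial. tauto. Qed.

Lemma ser_unique u w1 w2 : ser_has_sum u w1 -> ser_has_sum u w2 -> w1 = w2.
Proof. intros [H1 H2] [H3 H4]. apply Cpair_eq. eapply UL_sequence; eauto. eapply UL_sequence; eauto. Qed.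

Lemma ser_ext u v w : (forall m, u m = v m) -> ser_has_sum u w -> ser_has_sum v w.
Proof. intros E H. replace v with u; auto. apply functional_extensionality; auto. Qed.

Lemma real_dom_conv (v : nat -> R) M q : 0 <= q < 1 -> (forall m, Rabs (v m) <= M * q ^ m) ->
  { l | Un_cv (fun n => sum_f_R0 v n) l }.
Proof.
  intros Hq Hv. apply R_complete. apply cauchy_abs. apply CV_Cauchy.
  apply Rseries_CV_comp with (Bn := fun m => M * q ^ m).
  - intros n; split. apply Rabs_pos. apply Hv.
  - exists (M * / (1 - q)).
    assert (G := GP_infinite q). rewrite Rabs_pos_eq in G by lra. specialize (G (proj2 Hq)).
    intros eps Heps.
    assert (HM: 0 < Rabs M + 1) by (generalize (Rabs_pos M); lra).
    destruct (G (eps / (Rabs M + 1))) as [N HN]. apply Rdiv_lt_0_compat; lra.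
    exists N. intros n Hn. specialize (HN n Hn). unfold Rdist, R_dist in *.
    assert (E: sum_f_R0 (fun m => M * q ^ m) n = M * sum_f_R0 (fun n0 : nat => 1 * q ^ n0) n).
    { rewrite scal_sum. apply sum_eq. intros; ring. }
    rewrite E. replace (M * sum_f_R0 (fun n0 : nat => 1 * q ^ n0) n - M * / (1 - q)) with
      (M * (sum_f_R0 (fun n0 : nat => 1 * q ^ n0) n - / (1 - q))) by ring.
    rewrite Rabs_mult. apply Rle_lt_trans with (Rabs M * (eps / (Rabs M + 1))).
    apply Rmult_le_compat_l. apply Rabs_pos. lra.
    unfold Rdiv. rewrite <- Rmult_assoc. apply Rmult_lt_reg_r with (Rabs M + 1). lra.
    rewrite Rmult_assoc, Rinv_l by lra. generalize (Rabs_pos M). nra.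
Qed.

Lemma ser_dom_conv (u : nat -> Cplx) M q : 0 <= q < 1 -> (forall m, Cabs (u m) <= M * q ^ m) ->
  exists w, ser_has_sum u w.
Proof.
  intros Hq Hu.
  destruct (real_dom_conv (fun m => fst (u m)) M q Hq) as [l1 H1].
  { intro m. eapply Rle_trans. apply Cabs_fst. apply Hu. }
  destruct (real_dom_conv (fun m => snd (u m)) M q Hq) as [l2 H2].
  { intro m. eapply Rle_trans. apply Cabs_snd. apply Hu. }
  exists (l1, l2). split; cbn [fst snd]; intros eps Heps.
  - destruct (H1 eps Heps) as [N HN]. exists N. intros n Hn. rewrite csum_fst. apply HN; auto.
  - destruct (H2 eps Heps) as [N HN]. exists N. intros n Hn. rewrite csum_snd. apply HN; auto.
Qed.

Lemma ser_limit_bound u w z B : ser_has_sum u w -> 0 <= B ->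
  (forall n, Cabs (Csub (csum (S n) u) z) <= B) -> Cabs (Csub w z) <= B.
Proof.
  intros [H1 H2] HB Hb.
  assert (Hn: Cnorm2 (Csub w z) <= B * B).
  { apply Rle_cv_lim with (Un := fun n => Cnorm2 (Csub (csum (S n) u) z)) (Vn := fun n => B * B).
    - intro n. rewrite <- Cabs_sq. specialize (Hb n). generalize (Cabs_ge0 (Csub (csum (S n) u) z)). nra.
    - unfold Cnorm2, Csub, Cadd, Copp; simpl.
      apply CV_plus; apply CV_mult; apply CV_plus; auto; intros e He; exists O; intros;
        unfold Rdist, R_dist; rewrite Rminus_diag, Rabs_R0; auto.
    - intros e He; exists O; intros; unfold Rdist, R_dist; rewrite Rminus_diag, Rabs_R0; auto. }
  rewrite <- Cabs_sq in Hn. generalize (Cabs_ge0 (Csub w z)). nra.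
Qed.

Fixpoint rsum (n : nat) (f : nat -> R) : R :=
  match n with O => 0 | S k => rsum k f + f k end.
Lemma Cabs_csum n f : Cabs (csum n f) <= rsum n (fun m => Cabs (f m)).
Proof. induction n; simpl. rewrite Cabs0; lra. eapply Rle_trans. apply Cabs_triangle. lra. Qed.
Lemma rsum_le n f g : (forall m, (m < n)%nat -> f m <= g m) -> rsum n f <= rsum n g.
Proof. induction n; simpl; intros. lra. apply Rplus_le_compat; auto. Qed.
Lemma rsum_geom n q : 0 <= q < 1 -> rsum n (fun m => q ^ m) <= / (1 - q).
Proof. intros Hq. assert (E: rsum n (fun m => q ^ m) * (1 - q) = 1 - q ^ n).
  { induction n; simpl. ring. rewrite Rmult_plus_distr_r, IHn. ring. }
  apply Rmult_le_reg_r with (1 - q). lra. rewrite E, Rinv_l by lra.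
  generalize (pow_le q n (proj1 Hq)). lra. Qed.
Lemma rsum_scal n f c : rsum n (fun m => c * f m) = c * rsum n f.
Proof. induction n; simpl. ring. rewrite IHn. ring. Qed.
Lemma rsum_nonneg n f : (forall m, 0 <= f m) -> 0 <= rsum n f.
Proof. intros H; induction n; simpl. lra. specialize (H n). lra. Qed.

Lemma cv_bounded (U : nat -> R) l : Un_cv U l -> exists B, forall n, Rabs (U n) <= B.
Proof.
  intros H. destruct (H 1 Rlt_0_1) as [N HN].
  exists (Rabs l + 1 + rsum N (fun k => Rabs (U k))). intro n.
  assert (Hp: forall k, 0 <= rsum k (fun k => Rabs (U k))) by (intro; apply rsum_nonneg; intro; apply Rabs_pos).
  destruct (le_lt_dec N n) as [Hn|Hn].
  - specialize (HN n Hn). unfold Rdist, R_dist in HN. specialize (Hp N).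
    assert (Rabs (U n) <= Rabs (U n - l) + Rabs l) by (replace (U n) with ((U n - l) + l) at 1 by ring; apply Rabs_triang).
    lra.
  - assert (Rabs (U n) <= rsum N (fun k => Rabs (U k))).
    { clear HN. induction N. lia. simpl. destruct (Nat.eq_dec n N). subst. generalize (Hp N). lra.
      assert (n < N)%nat by lia. specialize (IHN H0). generalize (Rabs_pos (U N)). lra. }
    generalize (Rabs_pos l). lra.
Qed.

Lemma ser_term_bounded u w : ser_has_sum u w -> exists M, forall m, Cabs (u m) <= M.
Proof.
  intros [H1 H2]. destruct (cv_bounded _ _ H1) as [B1 HB1]. destruct (cv_bounded _ _ H2) as [B2 HB2].
  exists (2 * B1 + 2 * B2). intro m. eapply Rle_trans. apply Cabs_le_comp.
  destruct m.
  - specialize (HB1 O). specialize (HB2 O). simpl in HB1, HB2. unfold C0 in *; simpl in *.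
    rewrite Rplus_0_l in HB1, HB2. generalize (Rabs_pos (fst (u O))) (Rabs_pos (snd (u O))). lra.
  - assert (E1: fst (u (S m)) = fst (csum (S (S m)) u) - fst (csum (S m) u)) by (simpl; ring).
    assert (E2: snd (u (S m)) = snd (csum (S (S m)) u) - snd (csum (S m) u)) by (simpl; ring).
    rewrite E1, E2.
    generalize (Rabs_triang (fst (csum (S (S m)) u)) (- fst (csum (S m) u)))
               (Rabs_triang (snd (csum (S (S m)) u)) (- snd (csum (S m) u))).
    rewrite !Rabs_Ropp. unfold Rminus.
    generalize (HB1 (S m)) (HB1 m) (HB2 (S m)) (HB2 m). lra.
Qed.

Lemma Cabs_lt_of_norm2 s rho : 0 < rho -> Cnorm2 s < rho * rho -> Cabs s < rho.
Proof. intros H1 H2. rewrite <- Cabs_sq in H2. generalize (Cabs_ge0 s). nra. Qed.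

Lemma ps_dom a rho s : 0 < rho -> ps_conv_on a rho -> Cnorm2 s < rho * rho ->
  exists M q, 0 <= q < 1 /\ forall m, Cabs (Cmul (a m) (Cpow s m)) <= M * q ^ m.
Proof.
  intros Hr Hc Hs. assert (Ha := Cabs_lt_of_norm2 _ _ Hr Hs). assert (H0 := Cabs_ge0 s).
  set (c := (Cabs s + rho) / 2).
  assert (Hc0 : 0 < c) by (unfold c; lra). assert (Hcr : c < rho) by (unfold c; lra).
  destruct (Hc (c, 0)) as [w Hw]. { unfold Cnorm2; simpl. nra. }
  apply ps_has_sum_ser in Hw. destruct (ser_term_bounded _ _ Hw) as [M HM].
  exists M, (Cabs s / c). split. split. unfold Rdiv; apply Rmult_le_pos; [lra| apply Rlt_le, Rinv_0_lt_compat; lra]. apply Rmult_lt_reg_r with c. lra.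
  unfold Rdiv. rewrite Rmult_assoc, Rinv_l by lra. unfold c. lra.
  intro m. specialize (HM m). rewrite Cabs_mul, Cabs_pow, Cabs_real, Rabs_pos_eq in HM by lra.
  rewrite Cabs_mul, Cabs_pow. unfold Rdiv. rewrite Rpow_mult_distr.
  assert (Hcm: 0 < c ^ m) by (apply pow_lt; lra).
  replace (Cabs (a m) * Cabs s ^ m) with ((Cabs (a m) * c ^ m) * (Cabs s ^ m * / c ^ m)).
  2:{ field. lra. }
  rewrite pow_inv. apply Rmult_le_compat_r. apply Rmult_le_pos. apply pow_le; lra.
  apply Rlt_le, Rinv_0_lt_compat, pow_lt; lra. auto.
Qed.

Lemma ps_eval_spec a rho s : 0 < rho -> ps_conv_on a rho -> Cnorm2 s < rho * rho ->
  ps_has_sum a s (ps_eval a s).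
Proof. intros Hr Hc Hs. unfold ps_eval. apply epsilon_spec. apply Hc; auto. Qed.

Lemma ps_eval_eq a s w : ps_has_sum a s w -> ps_eval a s = w.
Proof. intros H. unfold ps_eval. apply (ser_unique (fun m => Cmul (a m) (Cpow s m)));
  apply ps_has_sum_ser; auto. apply epsilon_spec. eauto. Qed.

Lemma bern h n : 0 <= h -> 1 + INR n * h <= (1 + h) ^ n.
Proof. intro Hh. induction n. simpl; lra. rewrite S_INR. simpl.
  assert (0 <= INR n) by apply pos_INR. nra. Qed.

Lemma nrn_bound r : 0 < r < 1 -> exists C, 0 <= C /\ forall n, INR n * r ^ n <= C.
Proof. intros Hr. set (h := / r - 1). assert (Hh: 0 < h).
  { unfold h. assert (1 < / r). { rewrite <- Rinv_1. apply Rinv_lt_contravar; lra. } lra. }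
  exists (/ h). split. left; apply Rinv_0_lt_compat; auto. intro n.
  assert (B := bern h n (Rlt_le _ _ Hh)). replace (1 + h) with (/ r) in B by (unfold h; ring).
  rewrite pow_inv in B. assert (Hrn: 0 < r ^ n) by (apply pow_lt; lra).
  assert (INR n * h <= / r ^ n) by lra.
  apply Rmult_le_reg_r with h; auto. rewrite Rinv_l by lra.
  apply Rmult_le_reg_l with (/ r ^ n). apply Rinv_0_lt_compat; auto.
  replace (/ r ^ n * (INR n * r ^ n * h)) with (INR n * h) by (field; lra). lra. Qed.

Lemma n2qn q : 0 <= q < 1 -> Un_cv (fun n => INR n * INR n * q ^ n) 0.
Proof.
  intros Hq. set (r4 := (1 + q) / 2). set (r := sqrt (sqrt r4)).
  assert (Hr4: 0 < r4 < 1) by (unfold r4; lra).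
  assert (Hr2: r * r = sqrt r4) by (unfold r; apply sqrt_sqrt; apply sqrt_pos).
  assert (Hr4': sqrt r4 * sqrt r4 = r4) by (apply sqrt_sqrt; lra).
  assert (Hs0: 0 < sqrt r4) by (apply sqrt_lt_R0; lra).
  assert (Hs1: sqrt r4 < 1) by (rewrite <- sqrt_1; apply sqrt_lt_1; lra).
  assert (Hr0: 0 < r) by (unfold r; apply sqrt_lt_R0; lra).
  assert (Hr1: r < 1) by (unfold r; rewrite <- sqrt_1; apply sqrt_lt_1; lra).
  destruct (nrn_bound r (conj Hr0 Hr1)) as [C [HC0 HC]].
  intros eps Heps.
  destruct (pow_lt_1_zero (sqrt r4)) with (y := eps / (C * C + 1)) as [N HN].
  rewrite Rabs_pos_eq; lra. apply Rdiv_lt_0_compat; nra.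
  exists N. intros n Hn. specialize (HN n Hn). rewrite Rabs_pos_eq in HN by (apply pow_le; lra).
  unfold Rdist, R_dist. rewrite Rminus_0_r.
  assert (Hq': q ^ n <= (r ^ n * r ^ n) * sqrt r4 ^ n).
  { rewrite <- Rpow_mult_distr, Hr2, <- Rpow_mult_distr, Hr4'. apply pow_incr. unfold r4; lra. }
  assert (HI: 0 <= INR n) by apply pos_INR.
  assert (H1: 0 <= INR n * r ^ n) by (apply Rmult_le_pos; auto; apply pow_le; lra).
  assert (H2: 0 <= sqrt r4 ^ n) by (apply pow_le; lra).
  assert (H3: 0 <= q ^ n) by (apply pow_le; lra).
  rewrite Rabs_pos_eq by (apply Rmult_le_pos; [nra| lra]).
  apply Rle_lt_trans with ((INR n * r ^ n) * (INR n * r ^ n) * sqrt r4 ^ n).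
  { replace ((INR n * r ^ n) * (INR n * r ^ n) * sqrt r4 ^ n) with (INR n * INR n * ((r ^ n * r ^ n) * sqrt r4 ^ n)) by ring.
    apply Rmult_le_compat_l; nra. }
  apply Rle_lt_trans with (C * C * sqrt r4 ^ n).
  { apply Rmult_le_compat_r; auto. specialize (HC n). nra. }
  apply Rle_lt_trans with ((C * C + 1) * sqrt r4 ^ n). nra.
  apply Rmult_lt_reg_l with (/ (C * C + 1)). apply Rinv_0_lt_compat; nra.
  rewrite <- Rmult_assoc, Rinv_l by nra. unfold Rdiv in HN. nra.
Qed.

Definition CS (A B : nat -> R) (N : nat) : R :=
  sum_f_R0 (fun k => sum_f_R0 (fun p => A p * B (k - p)%nat) k) N.

Lemma Un_cv_ev (U V : nat -> R) l N0 : (forall n, (N0 <= n)%nat -> U n = V n) -> Un_cv V l -> Un_cv U l.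
Proof. intros E H eps Heps. destruct (H eps Heps) as [N HN]. exists (max N N0). intros n Hn.
  rewrite E by lia. apply HN. lia. Qed.

Lemma real_mertens (A B : nat -> R) M q LA LB : 0 <= q < 1 ->
  (forall p, Rabs (A p) <= M * q ^ p) -> (forall p, Rabs (B p) <= M * q ^ p) ->
  Un_cv (fun n => sum_f_R0 A n) LA -> Un_cv (fun n => sum_f_R0 B n) LB ->
  Un_cv (CS A B) (LA * LB).
Proof.
  intros Hq HA HB HLA HLB.
  assert (HM: 0 <= M) by (specialize (HA O); simpl in HA; generalize (Rabs_pos (A O)); lra).
  set (Rem := fun N => sum_f_R0 (fun k => sum_f_R0 (fun l => A (S (l + k)) * B (N - l)%nat) (pred (N - k))) (pred N)).
  apply Un_cv_ev with (V := fun N => sum_f_R0 A N * sum_f_R0 B N - Rem N) (N0 := 1%nat).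
  { intros n Hn. unfold CS, Rem. rewrite (cauchy_finite A B n) by lia. ring. }
  replace (LA * LB) with (LA * LB - 0) by ring. apply CV_minus. apply CV_mult; auto.
  assert (Hqa: forall a b, (b <= a)%nat -> q ^ a <= q ^ b).
  { intros a b Hab. replace a with (b + (a - b))%nat by lia. rewrite pow_add.
    assert (0 <= q ^ b) by (apply pow_le; lra). assert (q ^ (a - b) <= 1) by (rewrite <- (pow1 (a - b)); apply pow_incr; lra). nra. }
  assert (Hb: forall N, (1 <= N)%nat -> Rabs (Rem N) <= M * M * (INR N * INR N * q ^ N)).
  { intros N HN. unfold Rem. eapply Rle_trans. apply sum_f_R0_triangle.
    apply Rle_trans with (sum_f_R0 (fun k => M * M * q ^ N * INR N) (pred N)).
    - apply sum_Rle. intros k Hk. eapply Rle_trans. apply sum_f_R0_triangle.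
      apply Rle_trans with (sum_f_R0 (fun l => M * M * q ^ N) (pred (N - k))).
      + apply sum_Rle. intros l Hl. rewrite Rabs_mult.
        apply Rle_trans with ((M * q ^ (S (l + k))) * (M * q ^ (N - l)%nat)).
        apply Rmult_le_compat; auto using Rabs_pos.
        replace ((M * q ^ (S (l + k))) * (M * q ^ (N - l)%nat)) with (M * M * (q ^ (S (l + k)) * q ^ (N - l)%nat)) by ring.
        apply Rmult_le_compat_l. nra. rewrite <- pow_add. apply Hqa. lia.
      + rewrite sum_cte. apply Rmult_le_compat_l. assert (0 <= q ^ N) by (apply pow_le; lra). nra.
        apply le_INR. lia.
    - rewrite sum_cte. replace (S (pred N)) with N by lia. right; ring. }
  apply Un_cv_ev with (V := fun N => Rem N) (N0 := O); auto.
  intros eps Heps. destruct (n2qn q Hq (eps / (M * M + 1))) as [N HN]. apply Rdiv_lt_0_compat; nra.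
  exists (max N 1). intros n Hn. specialize (HN n ltac:(lia)). specialize (Hb n ltac:(lia)).
  unfold Rdist, R_dist in *. rewrite Rminus_0_r in *.
  assert (H0: 0 <= INR n * INR n * q ^ n) by (apply Rmult_le_pos; [apply Rmult_le_pos; apply pos_INR| apply pow_le; lra]).
  rewrite Rabs_pos_eq in HN by auto.
  apply Rle_lt_trans with (M * M * (INR n * INR n * q ^ n)); auto.
  apply Rle_lt_trans with ((M * M + 1) * (INR n * INR n * q ^ n)). nra.
  apply Rmult_lt_reg_l with (/ (M * M + 1)). apply Rinv_0_lt_compat; nra.
  rewrite <- Rmult_assoc, Rinv_l by nra. unfold Rdiv in HN. nra.
Qed.

Definition cprod (a b : nat -> Cplx) (m : nat) : Cplx :=
  csum (S m) (fun l => Cmul (a l) (b (m - l)%nat)).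

Lemma cprod_term a b s k : Cmul (cprod a b k) (Cpow s k) =
  csum (S k) (fun p => Cmul (Cmul (a p) (Cpow s p)) (Cmul (b (k - p)%nat) (Cpow s (k - p)%nat))).
Proof. unfold cprod. rewrite Cmul_comm, <- csum_mull. apply csum_ext. intros p Hp.
  replace (Cpow s k) with (Cmul (Cpow s p) (Cpow s (k - p)%nat)).
  csolve. rewrite <- Cpow_add. f_equal. lia. Qed.

Lemma cprod_has_sum a b s A B M q : 0 <= q < 1 ->
  (forall m, Cabs (Cmul (a m) (Cpow s m)) <= M * q ^ m) ->
  (forall m, Cabs (Cmul (b m) (Cpow s m)) <= M * q ^ m) ->
  ps_has_sum a s A -> ps_has_sum b s B -> ps_has_sum (cprod a b) s (Cmul A B).
Proof.
  intros Hq Ha Hb HA HB. apply ps_has_sum_ser in HA, HB. apply ps_has_sum_ser.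
  set (u := fun m => Cmul (a m) (Cpow s m)) in *. set (v := fun m => Cmul (b m) (Cpow s m)) in *.
  destruct HA as [HA1 HA2]. destruct HB as [HB1 HB2]. unfold ps_partial in *.
  assert (Du1: forall p, Rabs (fst (u p)) <= M * q ^ p) by (intro; eapply Rle_trans; [apply Cabs_fst| apply Ha]).
  assert (Du2: forall p, Rabs (snd (u p)) <= M * q ^ p) by (intro; eapply Rle_trans; [apply Cabs_snd| apply Ha]).
  assert (Dv1: forall p, Rabs (fst (v p)) <= M * q ^ p) by (intro; eapply Rle_trans; [apply Cabs_fst| apply Hb]).
  assert (Dv2: forall p, Rabs (snd (v p)) <= M * q ^ p) by (intro; eapply Rle_trans; [apply Cabs_snd| apply Hb]).
  assert (SA1: Un_cv (fun n => sum_f_R0 (fun p => fst (u p)) n) (fst A)) by (eapply (Un_cv_ev _ _ _ O); [| exact HA1]; intros; cbv beta; rewrite csum_fst; auto).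
  assert (SA2: Un_cv (fun n => sum_f_R0 (fun p => snd (u p)) n) (snd A)) by (eapply (Un_cv_ev _ _ _ O); [| exact HA2]; intros; cbv beta; rewrite csum_snd; auto).
  assert (SB1: Un_cv (fun n => sum_f_R0 (fun p => fst (v p)) n) (fst B)) by (eapply (Un_cv_ev _ _ _ O); [| exact HB1]; intros; cbv beta; rewrite csum_fst; auto).
  assert (SB2: Un_cv (fun n => sum_f_R0 (fun p => snd (v p)) n) (snd B)) by (eapply (Un_cv_ev _ _ _ O); [| exact HB2]; intros; cbv beta; rewrite csum_snd; auto).
  split.
  - apply Un_cv_ev with (N0 := O) (V := fun N => CS (fun p => fst (u p)) (fun p => fst (v p)) N - CS (fun p => snd (u p)) (fun p => snd (v p)) N).
    + intros N _. rewrite csum_fst. unfold CS. rewrite <- minus_sum. apply sum_eq. intros k Hk.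
      rewrite cprod_term. rewrite csum_fst. rewrite <- minus_sum. apply sum_eq. intros p Hp.
      unfold u, v. simpl. reflexivity.
    + simpl. apply CV_minus; eapply real_mertens; eauto.
  - apply Un_cv_ev with (N0 := O) (V := fun N => CS (fun p => fst (u p)) (fun p => snd (v p)) N + CS (fun p => snd (u p)) (fun p => fst (v p)) N).
    + intros N _. rewrite csum_snd. unfold CS. rewrite <- sum_plus. apply sum_eq. intros k Hk.
      rewrite cprod_term. rewrite csum_snd. rewrite <- sum_plus. apply sum_eq. intros p Hp.
      unfold u, v. simpl. reflexivity.
    + simpl. apply CV_plus; eapply real_mertens; eauto.
Qed.

Definition coef_bd (a : nat -> Cplx) (rho : R) : Prop :=
  forall c, 0 < c < rho -> exists M, forall m, Cabs (a m) * c ^ m <= M.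

Lemma conv_coef a rho : ps_conv_on a rho -> coef_bd a rho.
Proof. intros H c Hc. destruct (H (c, 0)) as [w Hw]. unfold Cnorm2; simpl; nra.
  apply ps_has_sum_ser in Hw. destruct (ser_term_bounded _ _ Hw) as [M HM]. exists M. intro m.
  specialize (HM m). rewrite Cabs_mul, Cabs_pow, Cabs_real, Rabs_pos_eq in HM by lra. auto. Qed.

Lemma coef_dom a rho s : 0 < rho -> coef_bd a rho -> Cnorm2 s < rho * rho ->
  exists M q, 0 <= q < 1 /\ forall m, Cabs (Cmul (a m) (Cpow s m)) <= M * q ^ m.
Proof.
  intros Hr Hc Hs. assert (Ha := Cabs_lt_of_norm2 _ _ Hr Hs). assert (H0 := Cabs_ge0 s).
  set (c := (Cabs s + rho) / 2).
  assert (Hc0 : 0 < c) by (unfold c; lra). assert (Hcr : c < rho) by (unfold c; lra).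
  destruct (Hc c (conj Hc0 Hcr)) as [M HM].
  exists M, (Cabs s / c). split. split. unfold Rdiv; apply Rmult_le_pos; [lra| apply Rlt_le, Rinv_0_lt_compat; lra].
  apply Rmult_lt_reg_r with c. lra.
  unfold Rdiv. rewrite Rmult_assoc, Rinv_l by lra. unfold c. lra.
  intro m. specialize (HM m).
  rewrite Cabs_mul, Cabs_pow. unfold Rdiv. rewrite Rpow_mult_distr.
  assert (Hcm: 0 < c ^ m) by (apply pow_lt; lra).
  replace (Cabs (a m) * Cabs s ^ m) with ((Cabs (a m) * c ^ m) * (Cabs s ^ m * / c ^ m)).
  2:{ field. lra. }
  rewrite pow_inv. apply Rmult_le_compat_r. apply Rmult_le_pos. apply pow_le; lra.
  apply Rlt_le, Rinv_0_lt_compat, pow_lt; lra. auto.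
Qed.

Lemma coef_conv a rho : 0 < rho -> coef_bd a rho -> ps_conv_on a rho.
Proof. intros Hr Hc s Hs. destruct (coef_dom a rho s Hr Hc Hs) as [M [q [Hq Hd]]].
  destruct (ser_dom_conv _ M q Hq Hd) as [w Hw]. exists w. apply ps_has_sum_ser; auto. Qed.

Lemma dom_join (u v : nat -> Cplx) M1 q1 M2 q2 : 0 <= q1 < 1 -> 0 <= q2 < 1 ->
  (forall m, Cabs (u m) <= M1 * q1 ^ m) -> (forall m, Cabs (v m) <= M2 * q2 ^ m) ->
  exists M q, 0 <= q < 1 /\ (forall m, Cabs (u m) <= M * q ^ m) /\ (forall m, Cabs (v m) <= M * q ^ m).
Proof.
  intros H1 H2 Hu Hv. exists (Rmax M1 M2), (Rmax q1 q2). split. unfold Rmax; destruct Rle_dec; lra.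
  assert (HM1: 0 <= M1) by (specialize (Hu O); simpl in Hu; generalize (Cabs_ge0 (u O)); lra).
  assert (HM2: 0 <= M2) by (specialize (Hv O); simpl in Hv; generalize (Cabs_ge0 (v O)); lra).
  split; intro m.
  - eapply Rle_trans. apply Hu. apply Rmult_le_compat. auto. apply pow_le; lra. apply Rmax_l.
    apply pow_incr. split. lra. apply Rmax_l.
  - eapply Rle_trans. apply Hv. apply Rmult_le_compat. auto. apply pow_le; lra. apply Rmax_r.
    apply pow_incr. split. lra. apply Rmax_r.
Qed.

Lemma cprod_conv a b rho : 0 < rho -> ps_conv_on a rho -> ps_conv_on b rho ->
  ps_conv_on (cprod a b) rho /\
  forall s, Cnorm2 s < rho * rho -> ps_eval (cprod a b) s = Cmul (ps_eval a s) (ps_eval b s).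
Proof.
  intros Hr Ha Hb.
  assert (K: forall s, Cnorm2 s < rho * rho -> ps_has_sum (cprod a b) s (Cmul (ps_eval a s) (ps_eval b s))).
  { intros s Hs. destruct (ps_dom a rho s Hr Ha Hs) as [M1 [q1 [Hq1 H1]]].
    destruct (ps_dom b rho s Hr Hb Hs) as [M2 [q2 [Hq2 H2]]].
    destruct (dom_join _ _ _ _ _ _ Hq1 Hq2 H1 H2) as [M [q [Hq [D1 D2]]]].
    eapply cprod_has_sum; eauto; eapply ps_eval_spec; eauto. }
  split. intros s Hs. eexists; eauto. intros s Hs. apply ps_eval_eq; auto.
Qed.

Definition cadd (a b : nat -> Cplx) (m : nat) : Cplx := Cadd (a m) (b m).

Lemma ser_add u v U V : ser_has_sum u U -> ser_has_sum v V -> ser_has_sum (fun m => Cadd (u m) (v m)) (Cadd U V).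
Proof. intros [H1 H2] [H3 H4]. split.
  - eapply (Un_cv_ev _ _ _ O). 2: apply CV_plus; [exact H1| exact H3]. intros n _. cbv beta. rewrite csum_add. reflexivity.
  - eapply (Un_cv_ev _ _ _ O). 2: apply CV_plus; [exact H2| exact H4]. intros n _. cbv beta. rewrite csum_add. reflexivity.
Qed.

Lemma cadd_conv a b rho : 0 < rho -> ps_conv_on a rho -> ps_conv_on b rho ->
  ps_conv_on (cadd a b) rho /\
  forall s, Cnorm2 s < rho * rho -> ps_eval (cadd a b) s = Cadd (ps_eval a s) (ps_eval b s).
Proof.
  intros Hr Ha Hb.
  assert (K: forall s, Cnorm2 s < rho * rho -> ps_has_sum (cadd a b) s (Cadd (ps_eval a s) (ps_eval b s))).
  { intros s Hs. apply ps_has_sum_ser. eapply ser_ext. 2: apply ser_add; apply ps_has_sum_ser; eapply ps_eval_spec; eauto.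
    intro m. unfold cadd. csolve. }
  split. intros s Hs. eexists; eauto. intros s Hs. apply ps_eval_eq; auto.
Qed.

Lemma ser_scal u U c : ser_has_sum u U -> ser_has_sum (fun m => Cmul c (u m)) (Cmul c U).
Proof. intros [H1 H2]. destruct c as [c1 c2]. split.
  - eapply (Un_cv_ev _ _ _ O). 2: apply CV_minus; apply CV_mult; [| exact H1| | exact H2];
      intros e He; exists O; intros; unfold Rdist, R_dist; rewrite Rminus_diag, Rabs_R0; auto.
    intros n _. cbv beta. rewrite csum_mull. simpl. reflexivity.
  - eapply (Un_cv_ev _ _ _ O). 2: apply CV_plus; apply CV_mult; [| exact H2| | exact H1];
      intros e He; exists O; intros; unfold Rdist, R_dist; rewrite Rminus_diag, Rabs_R0; auto.
    intros n _. cbv beta. rewrite csum_mull. simpl. reflexivity.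
Qed.

Definition cscal (c : Cplx) (a : nat -> Cplx) (m : nat) : Cplx := Cmul c (a m).

Lemma cscal_conv c a rho : 0 < rho -> ps_conv_on a rho ->
  ps_conv_on (cscal c a) rho /\
  forall s, Cnorm2 s < rho * rho -> ps_eval (cscal c a) s = Cmul c (ps_eval a s).
Proof.
  intros Hr Ha.
  assert (K: forall s, Cnorm2 s < rho * rho -> ps_has_sum (cscal c a) s (Cmul c (ps_eval a s))).
  { intros s Hs. apply ps_has_sum_ser. eapply ser_ext. 2: apply ser_scal; apply ps_has_sum_ser; eapply ps_eval_spec; eauto.
    intro m. unfold cscal. csolve. }
  split. intros s Hs. eexists; eauto. intros s Hs. apply ps_eval_eq; auto.
Qed.

Lemma csum_split_last n f : (forall m, (n <= m)%nat -> f m = C0) -> forall N, (n <= N)%nat -> csum N f = csum n f.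
Proof. intros H N HN. induction HN. auto. simpl. rewrite IHHN, H by lia. apply Cadd_0r. Qed.

Lemma fin_has_sum a K s : (forall m, (K <= m)%nat -> a m = C0) ->
  ps_has_sum a s (csum K (fun m => Cmul (a m) (Cpow s m))).
Proof. intros H. apply ps_has_sum_ser.
  assert (E: forall N, (K <= N)%nat -> csum (S N) (fun m => Cmul (a m) (Cpow s m)) = csum K (fun m => Cmul (a m) (Cpow s m))).
  { intros N HN. apply csum_split_last. intros m Hm. rewrite H by auto. apply Cmul_0l. lia. }
  split; intros e He; exists K; intros n Hn; rewrite E by lia; unfold Rdist, R_dist; rewrite Rminus_diag, Rabs_R0; auto.
Qed.

Lemma fin_conv a K rho : 0 < rho -> (forall m, (K <= m)%nat -> a m = C0) -> ps_conv_on a rho.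
Proof. intros Hr H s Hs. eexists. apply (fin_has_sum a K); auto. Qed.

Lemma fin_eval a K s : (forall m, (K <= m)%nat -> a m = C0) ->
  ps_eval a s = csum K (fun m => Cmul (a m) (Cpow s m)).
Proof. intros H. apply ps_eval_eq. apply fin_has_sum; auto. Qed.

Definition sh (n : nat) (a : nat -> Cplx) (m : nat) : Cplx := a (m + n)%nat.
Definition tn (n : nat) (m : nat) : Cplx := if Nat.eqb m n then CC1 else C0.

Lemma sh_coef n a rho : coef_bd a rho -> coef_bd (sh n a) rho.
Proof. intros H c Hc. destruct (H c Hc) as [M HM]. exists (M / c ^ n). intro m. unfold sh.
  assert (0 < c ^ n) by (apply pow_lt; lra). specialize (HM (m + n)%nat). rewrite pow_add in HM.
  unfold Rdiv. apply Rmult_le_reg_r with (c ^ n). auto. replace (M * / c ^ n * c ^ n) with M by (field; lra). nra. Qed.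

Lemma sh_conv n a rho : 0 < rho -> ps_conv_on a rho -> ps_conv_on (sh n a) rho.
Proof. intros Hr H. apply coef_conv; auto. apply sh_coef, conv_coef; auto. Qed.

Lemma tn_eval n s : ps_eval (tn n) s = Cpow s n.
Proof. rewrite (fin_eval (tn n) (S n)). simpl. rewrite csum_zero. unfold tn. rewrite Nat.eqb_refl.
  rewrite Cadd_0l, Cmul_1l. auto. intros m Hm. unfold tn. destruct (Nat.eqb_spec m n). lia. apply Cmul_0l.
  intros m Hm. unfold tn. destruct (Nat.eqb_spec m n). lia. auto. Qed.

Lemma cprod_tn n a : (forall m, (m < n)%nat -> a m = C0) -> cprod (tn n) (sh n a) = a.
Proof. intros H. apply functional_extensionality. intro m. unfold cprod.
  destruct (le_lt_dec n m) as [Hm|Hm].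
  - replace (S m) with (S n + (m - n))%nat by lia.
    assert (G: forall k f, csum (S n + k) f = Cadd (csum (S n) f) (csum k (fun j => f (S n + j)%nat))).
    { induction k as [|k IHk]; intros f.
      - rewrite Nat.add_0_r. simpl. rewrite Cadd_0r. auto.
      - replace (S n + S k)%nat with (S (S n + k)) by lia.
        change (csum (S (S n + k)) f) with (Cadd (csum (S n + k) f) (f (S n + k)%nat)).
        rewrite (IHk f).
        change (csum (S k) (fun j => f (S n + j)%nat)) with (Cadd (csum k (fun j => f (S n + j)%nat)) (f (S n + k)%nat)).
        rewrite <- Cadd_assoc. f_equal. }
    rewrite G. rewrite csum_zero with (n := (m - n)%nat). rewrite Cadd_0r. simpl.
    rewrite csum_zero. unfold tn. rewrite Nat.eqb_refl, Cadd_0l, Cmul_1l. unfold sh. f_equal. lia.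
    intros k Hk. unfold tn. destruct (Nat.eqb_spec k n). lia. apply Cmul_0l.
    intros k Hk. unfold tn. destruct (Nat.eqb_spec (S n + k) n). lia. apply Cmul_0l.
  - rewrite H by auto. apply csum_zero. intros k Hk. unfold tn. destruct (Nat.eqb_spec k n). lia. apply Cmul_0l.
Qed.

Lemma shift_eval n a rho s : 0 < rho -> ps_conv_on a rho -> (forall m, (m < n)%nat -> a m = C0) ->
  Cnorm2 s < rho * rho -> ps_eval a s = Cmul (Cpow s n) (ps_eval (sh n a) s).
Proof. intros Hr Ha H Hs. rewrite <- (cprod_tn n a H) at 1.
  destruct (cprod_conv (tn n) (sh n a) rho Hr) as [_ E].
  apply fin_conv with (S n); auto. intros m Hm. unfold tn. destruct (Nat.eqb_spec m n). lia. auto.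
  apply sh_conv; auto. rewrite E; auto. rewrite tn_eval. auto. Qed.

Lemma least_nonzero (a : nat -> Cplx) : (exists m, a m <> C0) ->
  exists n, a n <> C0 /\ forall m, (m < n)%nat -> a m = C0.
Proof.
  intros [m Hm]. revert Hm. induction m as [m IH] using (well_founded_induction Wf_nat.lt_wf). intros Hm.
  destruct (classic (exists k, (k < m)%nat /\ a k <> C0)) as [[k [Hk1 Hk2]]|Hno].
  - apply (IH k Hk1 Hk2).
  - exists m. split; auto. intros k Hk. apply NNPP. intro. apply Hno. eauto.
Qed.

Lemma Cmul_neq0 z w : z <> C0 -> w <> C0 -> Cmul z w <> C0.
Proof. intros Hz Hw E. assert (Cabs (Cmul z w) = 0) by (rewrite E; apply Cabs0).
  rewrite Cabs_mul in H. apply Rmult_integral in H. destruct H as [H|H]; apply Cabs_eq0 in H; auto. Qed.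

Lemma Cpow_neq0 s n : s <> C0 -> Cpow s n <> C0.
Proof. intros H. induction n; simpl. unfold CC1, C0. intro E; inversion E; lra. apply Cmul_neq0; auto. Qed.

Lemma csum_shift1 N u : csum (S N) u = Cadd (u O) (csum N (fun m => u (S m))).
Proof. induction N; simpl in *. csolve. rewrite IHN. csolve. Qed.

Lemma ident_nz h rho : 0 < rho -> ps_conv_on h rho -> h O <> C0 ->
  forall eps, 0 < eps -> exists x, 0 < x < eps /\ x < rho /\ ps_eval h (x, 0) <> C0.
Proof.
  intros Hr Hc H0 eps He. set (c := rho / 2). assert (Hc0: 0 < c < rho) by (unfold c; lra).
  destruct (conv_coef h rho Hc c Hc0) as [M HM].
  assert (HM0: 0 <= M) by (specialize (HM O); simpl in HM; generalize (Cabs_ge0 (h O)); nra).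
  assert (Hh: 0 < Cabs (h O)) by (destruct (Cabs_ge0 (h O)); auto; exfalso; apply H0, Cabs_eq0; auto).
  set (x := Rmin (Rmin (eps / 2) (c / 2)) (Cabs (h O) * c / (4 * (M + 1)))).
  assert (Hx0: 0 < x). { unfold x. apply Rmin_pos. apply Rmin_pos; lra. apply Rdiv_lt_0_compat; nra. }
  assert (Hx1: x <= eps / 2) by (unfold x; eapply Rle_trans; [apply Rmin_l| apply Rmin_l]).
  assert (Hx2: x <= c / 2) by (unfold x; eapply Rle_trans; [apply Rmin_l| apply Rmin_r]).
  assert (Hx3: x <= Cabs (h O) * c / (4 * (M + 1))) by (unfold x; apply Rmin_r).
  exists x. split. lra. split. lra.
  set (t := x / c). assert (Ht: 0 < t <= 1/2). { unfold t. split. apply Rdiv_lt_0_compat; lra.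
    apply Rmult_le_reg_r with c. lra. unfold Rdiv. rewrite Rmult_assoc, Rinv_l by lra. lra. }
  assert (Dom: forall m, Cabs (Cmul (h m) (Cpow (x, 0) m)) <= M * t ^ m).
  { intro m. rewrite Cabs_mul, Cabs_pow, Cabs_real, Rabs_pos_eq by lra. specialize (HM m).
    unfold t, Rdiv. rewrite Rpow_mult_distr, pow_inv. assert (0 < c ^ m) by (apply pow_lt; lra).
    replace (Cabs (h m) * x ^ m) with ((Cabs (h m) * c ^ m) * (x ^ m * / c ^ m)) by (field; lra).
    apply Rmult_le_compat_r. apply Rmult_le_pos. apply pow_le; lra. apply Rlt_le, Rinv_0_lt_compat; auto. auto. }
  assert (Hs: Cnorm2 (x, 0) < rho * rho) by (unfold Cnorm2; simpl; nra).
  assert (Sp := ps_eval_spec h rho (x, 0) Hr Hc Hs). apply ps_has_sum_ser in Sp.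
  assert (B: Cabs (Csub (ps_eval h (x, 0)) (h O)) <= 2 * M * t).
  { apply ser_limit_bound with (u := fun m => Cmul (h m) (Cpow (x, 0) m)); auto. nra.
    intro N. rewrite csum_shift1. change (Cpow (x, 0) O) with CC1. replace (Cmul (h O) CC1) with (h O) by (rewrite Cmul_comm, Cmul_1l; auto).
    replace (Csub (Cadd (h O) (csum N (fun m => Cmul (h (S m)) (Cpow (x, 0) (S m))))) (h O))
      with (csum N (fun m => Cmul (h (S m)) (Cpow (x, 0) (S m)))) by (generalize (h O) (csum N (fun m => Cmul (h (S m)) (Cpow (x, 0) (S m)))); intros; csolve).
    eapply Rle_trans. apply Cabs_csum.
    apply Rle_trans with (rsum N (fun m => (M * t) * t ^ m)).
    apply rsum_le. intros m _. replace (M * t * t ^ m) with (M * t ^ (S m)) by (simpl; ring). apply Dom.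
    rewrite rsum_scal. apply Rle_trans with (M * t * / (1 - t)).
    apply Rmult_le_compat_l. nra. apply rsum_geom; lra.
    assert (Hi: / (1 - t) <= 2). { apply Rmult_le_reg_r with (1 - t). lra. rewrite Rinv_l by lra. lra. }
    assert (0 <= M * t) by nra. nra. }
  intro E. rewrite E in B. replace (Csub C0 (h O)) with (Copp (h O)) in B by (generalize (h O); intros; csolve).
  rewrite Cabs_opp in B.
  assert (2 * M * t < Cabs (h O)).
  { unfold t. apply Rle_lt_trans with (2 * M * (Cabs (h O) / (4 * (M + 1)))).
    apply Rmult_le_compat_l. lra. apply Rmult_le_reg_r with c. lra. unfold Rdiv at 1. rewrite Rmult_assoc, Rinv_l by lra.
    replace (Cabs (h O) / (4 * (M + 1)) * c) with (Cabs (h O) * c / (4 * (M + 1))) by (field; lra). lra.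
    apply Rmult_lt_reg_r with (4 * (M + 1)). lra. unfold Rdiv.
    replace (2 * M * (Cabs (h O) * / (4 * (M + 1))) * (4 * (M + 1))) with (2 * M * Cabs (h O)) by (field; lra). nra. }
  lra.
Qed.

Lemma identity_thm a rho : 0 < rho -> ps_conv_on a rho -> (exists m, a m <> C0) ->
  forall eps, 0 < eps -> exists x, 0 < x < eps /\ x < rho /\ ps_eval a (x, 0) <> C0.
Proof.
  intros Hr Hc Hnz eps He. destruct (least_nonzero a Hnz) as [n [Hn Hlt]].
  destruct (ident_nz (sh n a) rho Hr (sh_conv n a rho Hr Hc)) with (eps := eps) as [x [Hx1 [Hx2 Hx3]]]; auto.
  exists x. split; auto. split; auto. rewrite (shift_eval n a rho); auto.
  apply Cmul_neq0; auto. apply Cpow_neq0. unfold C0; intro E; inversion E; lra.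
  unfold Cnorm2; simpl; nra.
Qed.

Lemma conv_mono a rho rho' : ps_conv_on a rho -> 0 < rho' <= rho -> ps_conv_on a rho'.
Proof. intros H Hr s Hs. apply H. nra. Qed.

Lemma common_radius (k : nat) (P : nat -> R -> Prop) :
  (forall i rho rho', P i rho -> 0 < rho' <= rho -> P i rho') ->
  (forall i, (i < k)%nat -> exists rho, 0 < rho /\ P i rho) ->
  exists rho, 0 < rho /\ forall i, (i < k)%nat -> P i rho.
Proof.
  intros Hm. induction k; intros H.
  - exists 1. split. lra. intros; lia.
  - destruct IHk as [r1 [Hr1 H1]]. intros; apply H; lia.
    destruct (H k) as [r2 [Hr2 H2]]. lia.
    exists (Rmin r1 r2). split. apply Rmin_pos; auto. intros i Hi.
    destruct (Nat.eq_dec i k). subst. eapply Hm; eauto. split. apply Rmin_pos; auto. apply Rmin_r.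
    eapply Hm. apply H1. lia. split. apply Rmin_pos; auto. apply Rmin_l.
Qed.

Lemma germ_common2 a b : is_germ a -> is_germ b -> exists rho, 0 < rho /\ ps_conv_on a rho /\ ps_conv_on b rho.
Proof. intros [r1 [H1 C1']] [r2 [H2 C2']]. exists (Rmin r1 r2). split. apply Rmin_pos; auto.
  split; eapply conv_mono; eauto; split; try apply Rmin_pos; auto; [apply Rmin_l| apply Rmin_r]. Qed.

Lemma germ_add a b : is_germ a -> is_germ b -> is_germ (cadd a b).
Proof. intros Ha Hb. destruct (germ_common2 a b Ha Hb) as [r [Hr [H1 H2]]].
  exists r. split; auto. apply (proj1 (cadd_conv a b r Hr H1 H2)). Qed.
Lemma germ_mul a b : is_germ a -> is_germ b -> is_germ (cprod a b).
Proof. intros Ha Hb. destruct (germ_common2 a b Ha Hb) as [r [Hr [H1 H2]]].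
  exists r. split; auto. apply (proj1 (cprod_conv a b r Hr H1 H2)). Qed.
Lemma germ_scal c a : is_germ a -> is_germ (cscal c a).
Proof. intros [r [Hr H]]. exists r. split; auto. apply (proj1 (cscal_conv c a r Hr H)). Qed.
Lemma germ_fin a K : (forall m, (K <= m)%nat -> a m = C0) -> is_germ a.
Proof. intros H. exists 1. split. lra. apply fin_conv with K; auto; lra. Qed.
Lemma germ_sh n a : is_germ a -> is_germ (sh n a).
Proof. intros [r [Hr H]]. exists r. split; auto. apply sh_conv; auto. Qed.

Definition Cm1 : Cplx := (-1, 0).
Lemma Copp_scal z : Copp z = Cmul Cm1 z. Proof. unfold Cm1; csolve. Qed.

Definition Cinv (z : Cplx) : Cplx := (fst z / Cnorm2 z, - snd z / Cnorm2 z).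
Lemma Cinv_l z : z <> C0 -> Cmul (Cinv z) z = CC1.
Proof. intros H. assert (Hn: Cnorm2 z <> 0).
  { intro E. apply H. unfold Cnorm2, C0 in *. destruct z; simpl in *. f_equal; nra. }
  unfold Cinv, Cmul, CC1, Cnorm2 in *. destruct z as [x y]; simpl in *. f_equal; field; auto. Qed.

Lemma norm_real_lt x rho : 0 < x -> x < rho -> Cnorm2 (x, 0) < rho * rho.
Proof. intros. unfold Cnorm2; simpl. nra. Qed.
Lemma norm_real_pos x : 0 < x -> 0 < Cnorm2 (x, 0).
Proof. intros. unfold Cnorm2; simpl. nra. Qed.
Lemma real_neq0 x : 0 < x -> (x, 0) <> C0.
Proof. intros H E. inversion E. lra. Qed.
Lemma Csub_00 : Csub C0 C0 = C0. Proof. csolve. Qed.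
Lemma Csub_self z : Csub z z = C0. Proof. csolve. Qed.
Lemma Csub_Csub a b : Csub a (Csub a b) = b. Proof. csolve. Qed.
Lemma norm_pos_neq0 s : 0 < Cnorm2 s -> s <> C0.
Proof. intros H E. subst. unfold Cnorm2, C0 in H; simpl in H. lra. Qed.
From HB Require Import structures.
From mathcomp Require Import all_boot all_algebra.
Close Scope R_scope.
Set Implicit Arguments. Unset Strict Implicit. Unset Printing Implicit Defensive.
Import GRing.Theory.
Open Scope ring_scope.
Module CplxInst.
Set Implicit Arguments. Unset Strict Implicit. Unset Printing Implicit Defensive.

Definition cl_eqb {T : Type} (x y : T) : bool :=
  if excluded_middle_informative (x = y) then true else false.
Lemma cl_eqP {T : Type} : Equality.axiom (@cl_eqb T).
Proof. move=> x y; rewrite /cl_eqb; case: excluded_middle_informative => H; constructor; auto. Qed.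

Definition cl_find {T : Type} (P : pred T) (n : nat) : option T :=
  match excluded_middle_informative (exists x, P x) with
  | left H => Some (proj1_sig (constructive_indefinite_description _ H))
  | right _ => None end.
Lemma cl_find_correct {T : Type} (P : pred T) n x : cl_find P n = Some x -> P x.
Proof. rewrite /cl_find; case: excluded_middle_informative => // H [<-].
  exact: (proj2_sig (constructive_indefinite_description _ H)). Qed.
Lemma cl_find_complete {T : Type} (P : pred T) : (exists x, P x) -> exists n, cl_find P n.
Proof. move=> H; exists 0%N; rewrite /cl_find; case: excluded_middle_informative => //. Qed.
Lemma cl_find_ext {T : Type} (P Q : pred T) : P =1 Q -> cl_find P =1 cl_find Q.
Proof. move=> E n. have -> : P = Q by apply: functional_extensionality. by []. Qed.

HB.instance Definition _ := hasDecEq.Build Cplx cl_eqP.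
HB.instance Definition _ := hasChoice.Build Cplx cl_find_correct cl_find_complete cl_find_ext.

Lemma Cadd_left_inv z : Cadd (Copp z) z = C0. Proof. rewrite Cadd_comm; apply: Cadd_opp. Qed.
Lemma Cadd_assoc' : associative Cadd. Proof. move=> x y z; apply: Cadd_assoc. Qed.
HB.instance Definition _ := GRing.isZmodule.Build Cplx Cadd_assoc' Cadd_comm Cadd_0l Cadd_left_inv.
Lemma Cmul_assoc' : associative Cmul. Proof. move=> x y z; apply: Cmul_assoc. Qed.
Lemma C1_neq0 : CC1 != C0.
Proof. apply/eqP; rewrite /CC1 /C0 => [[E]]. move: E. apply: R1_neq_R0. Qed.
HB.instance Definition _ := GRing.Zmodule_isComNzRing.Build Cplx Cmul_assoc' Cmul_comm Cmul_1l Cmul_addl C1_neq0.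

Open Scope ring_scope.
Lemma csum_big n (f : nat -> Cplx) : csum n f = \sum_(j < n) f j.
Proof. elim: n => [|n IH] /=; first by rewrite big_ord0. by rewrite big_ord_recr /= IH. Qed.
End CplxInst.
Import CplxInst.
Set Implicit Arguments. Unset Strict Implicit. Unset Printing Implicit Defensive.
Import GRing.Theory.
Open Scope ring_scope.

Lemma cprod_big a b m : cprod a b m = \sum_(l < m.+1) a l * b (m - l)%N.
Proof. by rewrite /cprod csum_big. Qed.

Definition Tp (N : nat) (a : nat -> Cplx) : {poly Cplx} := \poly_(i < N) a i.

Lemma coefM_local (p q p' q' : {poly Cplx}) m :
  (forall j, (j <= m)%N -> p`_j = p'`_j) -> (forall j, (j <= m)%N -> q`_j = q'`_j) ->
  (p * q)`_m = (p' * q')`_m.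
Proof. move=> Hp Hq. rewrite !coefM. apply: eq_bigr => [[j Hj]] _ /=.
  by rewrite Hp // Hq // leq_subr. Qed.

Lemma cprod_poly a b m : cprod a b m = (Tp m.+1 a * Tp m.+1 b)`_m.
Proof. rewrite cprod_big coefM. apply: eq_bigr => [[j Hj]] _ /=.
  rewrite !coef_poly Hj. have -> : (m - j < m.+1)%N by rewrite ltnS leq_subr. by []. Qed.

Lemma cprod_poly' a b m N : (m < N)%N -> cprod a b m = (Tp N a * Tp N b)`_m.
Proof. move=> HN. rewrite cprod_poly. apply: coefM_local => j Hj; rewrite !coef_poly;
  rewrite (leq_ltn_trans Hj (ltnSn _)) (leq_ltn_trans Hj HN) //. Qed.

Lemma cprod_assoc a b c : cprod (cprod a b) c = cprod a (cprod b c).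
Proof. apply: functional_extensionality => m.
  rewrite (cprod_poly (cprod a b)) (cprod_poly a).
  transitivity ((Tp m.+1 a * Tp m.+1 b * Tp m.+1 c)`_m).
  - apply: coefM_local => // j Hj. rewrite coef_poly ltnS Hj. apply: cprod_poly'. by rewrite ltnS.
  - rewrite -mulrA. apply: coefM_local => // j Hj. rewrite [in RHS]coef_poly ltnS Hj.
    symmetry; apply: cprod_poly'. by rewrite ltnS.
Qed.

Lemma cprod_comm a b : cprod a b = cprod b a.
Proof. apply: functional_extensionality => m. by rewrite !cprod_poly mulrC. Qed.

Lemma cprod_addl a b c : cprod (cadd a b) c = cadd (cprod a c) (cprod b c).
Proof. apply: functional_extensionality => m. rewrite /cadd !cprod_big.
  have -> : Cadd (\sum_(l < m.+1) a l * c (m - l)%N) (\sum_(l < m.+1) b l * c (m - l)%N)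
    = \sum_(l < m.+1) a l * c (m - l)%N + \sum_(l < m.+1) b l * c (m - l)%N by [].
  rewrite -big_split /=. apply: eq_bigr => l _. by rewrite -mulrDl. Qed.

Lemma cprod_1l b : cprod (tn 0) b = b.
Proof. apply: functional_extensionality => m. rewrite cprod_big big_ord_recl /= subn0.
  rewrite big1 ?addr0; first by rewrite /tn /= mul1r.
  move=> i _. by rewrite /tn /= mul0r. Qed.
Set Implicit Arguments. Unset Strict Implicit. Unset Printing Implicit Defensive.
Import GRing.Theory.

Definition G : Type := {a : nat -> Cplx | is_germ a}.
Definition gv (x : G) : nat -> Cplx := proj1_sig x.
Lemma gvP (x : G) : is_germ (gv x). Proof. exact: proj2_sig x. Qed.
Lemma G_ext (x y : G) : gv x = gv y -> x = y.
Proof. case: x => [a Ha]; case: y => [b Hb] /= E. subst b. by rewrite (proof_irrelevance _ Ha Hb). Qed.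

HB.instance Definition _ := hasDecEq.Build G cl_eqP.
HB.instance Definition _ := hasChoice.Build G cl_find_correct cl_find_complete cl_find_ext.

Lemma germ_zero : is_germ (fun _ => C0). Proof. apply: (germ_fin (fun _ => C0) 0) => //. Qed.
Lemma germ_tn n : is_germ (tn n).
Proof. apply: (germ_fin (tn n) n.+1) => m Hm. rewrite /tn. case: PeanoNat.Nat.eqb_spec => // E.
  subst. move/leP: Hm. by rewrite ltnn. Qed.
Lemma germ_opp a : is_germ a -> is_germ (fun m => Copp (a m)).
Proof. move=> H. have -> : (fun m => Copp (a m)) = cscal Cm1 a.
  by apply: functional_extensionality => m; rewrite /cscal Copp_scal.
  exact: germ_scal _ _ H. Qed.

Definition G0 : G := exist _ _ germ_zero.
Definition G1 : G := exist _ _ (germ_tn 0).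
Definition Gadd (x y : G) : G := exist _ _ (germ_add _ _ (gvP x) (gvP y)).
Definition Gopp (x : G) : G := exist _ _ (germ_opp (gvP x)).
Definition Gmul (x y : G) : G := exist _ _ (germ_mul _ _ (gvP x) (gvP y)).

Lemma GaddA : associative Gadd.
Proof. move=> x y z; apply: G_ext; apply: functional_extensionality => m /=. rewrite /cadd. apply: Cadd_assoc. Qed.
Lemma GaddC : commutative Gadd.
Proof. move=> x y; apply: G_ext; apply: functional_extensionality => m /=. rewrite /cadd. apply: Cadd_comm. Qed.
Lemma Gadd0 : left_id G0 Gadd.
Proof. move=> x; apply: G_ext; apply: functional_extensionality => m /=. rewrite /cadd. apply: Cadd_0l. Qed.
Lemma GaddN : left_inverse G0 Gopp Gadd.
Proof. move=> x; apply: G_ext; apply: functional_extensionality => m /=. rewrite /cadd. apply: Cadd_left_inv. Qed.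
HB.instance Definition _ := GRing.isZmodule.Build G GaddA GaddC Gadd0 GaddN.

Lemma GmulA : associative Gmul.
Proof. move=> x y z; apply: G_ext => /=. by rewrite cprod_assoc. Qed.
Lemma GmulC : commutative Gmul.
Proof. move=> x y; apply: G_ext => /=. by rewrite cprod_comm. Qed.
Lemma Gmul1 : left_id G1 Gmul.
Proof. move=> x; apply: G_ext => /=. by rewrite cprod_1l. Qed.
Lemma GmulDl : left_distributive Gmul Gadd.
Proof. move=> x y z; apply: G_ext => /=. by rewrite cprod_addl. Qed.
Lemma G1_neq0 : G1 != G0 :> G.
Proof. apply/eqP => E. have := f_equal (fun x => gv x 0%N) E. rewrite /= /tn /=.
  move=> E'. move: C1_neq0. by rewrite E' eqxx. Qed.
HB.instance Definition _ := GRing.Zmodule_isComNzRing.Build G GmulA GmulC Gmul1 GmulDl G1_neq0.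

Definition Gunit : pred G := fun x => cl_eqb (exists y : G, y * x = 1) True.
Lemma GunitP x : reflect (exists y : G, y * x = 1) (Gunit x).
Proof. rewrite /Gunit /cl_eqb. case: excluded_middle_informative => H; constructor.
  by rewrite H. by move=> E; apply: H; apply: propositional_extensionality. Qed.
Definition Ginv (x : G) : G :=
  match excluded_middle_informative (exists y : G, y * x = 1) with
  | left H => proj1_sig (constructive_indefinite_description _ H)
  | right _ => x end.
Lemma GmulVx : {in Gunit, left_inverse 1 Ginv *%R}.
Proof. move=> x /GunitP H. rewrite /Ginv. case: excluded_middle_informative => // H'.
  exact: (proj2_sig (constructive_indefinite_description _ H')). Qed.
Lemma GunitPl : forall x y : G, y * x = 1 -> Gunit x.
Proof. move=> x y E. apply/GunitP. by exists y. Qed.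
Lemma Ginv_out : {in [predC Gunit], Ginv =1 id}.
Proof. move=> x. rewrite inE => /GunitP H. rewrite /Ginv. by case: excluded_middle_informative. Qed.
HB.instance Definition _ := GRing.ComNzRing_hasMulInverse.Build G GmulVx GunitPl Ginv_out.
Set Implicit Arguments. Unset Strict Implicit. Unset Printing Implicit Defensive.
Import GRing.Theory.
Open Scope ring_scope.

Lemma gv0 : gv (0 : G) = fun _ => C0. Proof. by []. Qed.
Lemma gvD (x y : G) : gv (x + y) = cadd (gv x) (gv y). Proof. by []. Qed.
Lemma gvM (x y : G) : gv (x * y) = cprod (gv x) (gv y). Proof. by []. Qed.
Lemma gv1 : gv (1 : G) = tn 0. Proof. by []. Qed.
Lemma gvN (x : G) : gv (- x) = fun m => Copp (gv x m). Proof. by []. Qed.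

Lemma G_nz (x : G) : x != 0 -> exists n, gv x n <> C0 /\ forall m, (m < n)%coq_nat -> gv x m = C0.
Proof. move=> H. apply: least_nonzero. apply: NNPP => Hn. move/eqP: H; apply. apply: G_ext.
  apply: functional_extensionality => m /=. apply: NNPP => Hm. apply: Hn. by exists m. Qed.

Lemma cprod_lowest a b na nb : a na <> C0 -> b nb <> C0 ->
  (forall m, (m < na)%coq_nat -> a m = C0) -> (forall m, (m < nb)%coq_nat -> b m = C0) ->
  cprod a b (na + nb)%N = Cmul (a na) (b nb).
Proof.
  move=> Ha Hb Hla Hlb. rewrite cprod_big.
  have Hi : (na < (na + nb).+1)%N by rewrite ltnS leq_addr.
  rewrite (bigD1 (Ordinal Hi)) //= big1 ?addr0; first by rewrite addKn.
  move=> [l Hl] /= Hne. have Hne' : l != na by apply: contra Hne => /eqP E; apply/eqP; apply: val_inj.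
  case: (ltngtP l na) => Hc.
  - by rewrite Hla ?mul0r //; apply/ltP.
  - rewrite (Hlb (na + nb - l)%N) ?mulr0 //. apply/ltP. rewrite ltn_subLR; last by rewrite -ltnS.
    by rewrite ltn_add2r.
  - by move: Hne'; rewrite Hc eqxx.
Qed.

Lemma G_integral : GRing.integral_domain_axiom G.
Proof.
  move=> x y E. apply: NNPP => H. have Hx : x != 0 by apply/negP => /eqP Ex; apply: H; rewrite Ex eqxx.
  have Hy : y != 0 by apply/negP => /eqP Ey; apply: H; rewrite Ey eqxx orbT.
  case: (G_nz Hx) => na [Ha Hla]. case: (G_nz Hy) => nb [Hb Hlb].
  have := f_equal (fun z => gv z (na + nb)%N) E. rewrite gvM gv0 (cprod_lowest Ha Hb Hla Hlb).
  exact: Cmul_neq0.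
Qed.
HB.instance Definition _ := GRing.ComUnitRing_isIntegral.Build G G_integral.
Set Implicit Arguments. Unset Strict Implicit. Unset Printing Implicit Defensive.
Import GRing.Theory.
Open Scope ring_scope.
Open Scope quotient_scope.

Section Frac.
Variable R : idomainType.
Local Notation tofrac := (@FracField.tofrac R).
Local Notation "x %:F" := (tofrac x).

Lemma frac_repr (x : {fraction R}) : exists a b : R, b != 0 /\ x = a%:F / b%:F.
Proof.
  exists (\n_(repr x)), (\d_(repr x)). split; first exact: denom_ratioP.
  have E : x = \pi_({fraction R}) (repr x) by rewrite reprK.
  rewrite {1}E. unlock tofrac.
  rewrite /GRing.inv /GRing.mul /=.
  rewrite -FracField.pi_inv -FracField.pi_mul.
  rewrite /FracField.mulf /FracField.invf.
  rewrite !numden_Ratio ?oner_neq0 ?denom_ratioP //.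
  by rewrite mulr1 mul1r Ratio_numden.
Qed.

Lemma clear_den n (x : 'cV[{fraction R}]_n) :
  exists c : R, c != 0 /\ exists y : 'cV[R]_n, map_mx tofrac y = c%:F *: x.
Proof.
  elim: n x => [|n IH] x.
  - exists 1; split; first exact: oner_neq0. exists 0. apply/matrixP => i j. by case: i.
  - have [c [Hc [y Hy]]] := IH (\col_(i < n) x (lift 0 i) 0).
    have [a [b [Hb Ex]]] := frac_repr (x 0 0).
    exists (c * b); split; first by rewrite mulf_neq0.
    exists (\col_i (if unlift 0 i is Some i' then b * y i' 0 else c * a)).
    apply/matrixP => i j. rewrite !mxE (ord1 j). case: unliftP => [i'|] Ei.
    + have := congr1 (fun M : 'cV_n => M i' 0) Hy. rewrite !mxE.
      rewrite rmorphM /= => ->. rewrite rmorphM -Ei /= mulrA. congr (_ * _). by rewrite mulrC.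
    + subst i. rewrite Ex !rmorphM /= -mulrA. congr (_ * _).
      rewrite mulrC divfK //. by rewrite tofrac_eq0.
Qed.

Lemma colM_ (F : pzRingType) m n p (A : 'M[F]_(m, n)) (B : 'M[F]_(n, p)) j :
  A *m col j B = col j (A *m B).
Proof. apply/matrixP => i k. rewrite !mxE. apply: eq_bigr => l _. by rewrite !mxE. Qed.

Lemma trmxZ_ (F : pzRingType) m n (a : F) (A : 'M[F]_(m, n)) : (a *: A)^T = a *: A^T.
Proof. apply/matrixP => i k. by rewrite !mxE. Qed.

Lemma scale_entry (F : pzRingType) m n (a : F) (A : 'M[F]_(m, n)) i j : (a *: A) i j = a * A i j.
Proof. by rewrite mxE. Qed.
Lemma zero_entry (F : pzRingType) m n i j : (0 : 'M[F]_(m, n)) i j = 0.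
Proof. by rewrite mxE. Qed.

Lemma tr_entry (F : pzRingType) m n (A : 'M[F]_(m, n)) i j : A^T j i = A i j.
Proof. by rewrite mxE. Qed.

Lemma dichotomy p k (D : 'M[R]_(p, k)) (b : 'cV[R]_p) :
  (exists y : 'cV[R]_k, exists c : R, c != 0 /\ D *m y = c *: b) \/
  (exists w : 'rV[R]_p, w *m D = 0 /\ w *m b != 0).
Proof.
  have Tinj : forall m n (A B : 'M[R]_(m, n)), map_mx tofrac A = map_mx tofrac B -> A = B.
  { move=> m n A B E. apply/matrixP => i j. have := congr1 (fun M : 'M[{fraction R}]_(m, n) => M i j) E. rewrite !mxE.
    by move/eqP; rewrite tofrac_eq => /eqP. }
  set Df := map_mx tofrac D. set bf := map_mx tofrac b.
  case: (boolP ((bf^T <= Df^T)%MS)) => H.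
  - left. move/submxP: H => [x Hx].
    have Eb : bf = Df *m x^T by rewrite -[bf]trmxK Hx trmx_mul trmxK.
    have [c [Hc [y Hy]]] := clear_den (x^T).
    exists y, c. split => //. apply: Tinj. rewrite map_mxM map_mxZ Hy -/Df -/bf.
    by rewrite -scalemxAr Eb.
  - right. rewrite submxE in H.
    have [j Hj] : exists j, (bf^T *m cokermx Df^T) 0 j != 0.
    { apply: NNPP => Hn. case/negP: H. apply/eqP/matrixP => i j. rewrite (ord1 i) [RHS]mxE.
      apply: NNPP => Hz. apply: Hn. exists j. by apply/eqP. }
    set v := col j (cokermx Df^T).
    have Hv0 : Df^T *m v = 0.
    { rewrite /v colM_ mulmx_coker. by apply/matrixP => a e; rewrite !mxE. }
    have Hvb : (bf^T *m v) 0 0 != 0 by rewrite /v colM_ mxE.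
    have [c [Hc [z Hz]]] := clear_den v.
    exists z^T. split.
    + apply: Tinj. rewrite map_mxM -map_trmx Hz -/Df map_mx0.
      rewrite trmxZ_ -(scalemxAl (c%:F) v^T Df).
      by rewrite -[Df]trmxK -trmx_mul Hv0 trmx0 scaler0.
    + apply/eqP => E.
      have E2 : map_mx tofrac (z^T *m b) = 0 by rewrite E map_mx0.
      rewrite map_mxM -map_trmx Hz -/bf trmxZ_ -(scalemxAl (c%:F) v^T bf) in E2.
      have := congr1 (fun M : 'M_1 => M 0 0) E2.
      rewrite scale_entry zero_entry.
      have -> : (v^T *m bf) = (bf^T *m v)^T by rewrite trmx_mul trmxK.
      rewrite tr_entry.
      move/eqP. rewrite mulf_eq0 tofrac_eq0 (negbTE Hc) /=. by rewrite (negbTE Hvb).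
Qed.
End Frac.
Set Implicit Arguments. Unset Strict Implicit. Unset Printing Implicit Defensive.
Import GRing.Theory.
Open Scope ring_scope.

Definition mkG (f : nat -> Cplx) : G :=
  match excluded_middle_informative (is_germ f) with
  | left H => exist _ f H | right _ => 0 end.
Lemma gv_mkG f : is_germ f -> gv (mkG f) = f.
Proof. move=> H. rewrite /mkG. by case: excluded_middle_informative. Qed.

Definition geval (x : G) (s : Cplx) : Cplx := ps_eval (gv x) s.
Definition gconv (rho : R) (x : G) : Prop := ps_conv_on (gv x) rho.

Section Eval.
Variable rho : R.
Hypothesis Hr : (Rlt 0 rho).

Lemma gconv_add x y : gconv rho x -> gconv rho y -> gconv rho (x + y).
Proof. move=> Hx Hy. exact: (proj1 (cadd_conv _ _ rho Hr Hx Hy)). Qed.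
Lemma gconv_mul x y : gconv rho x -> gconv rho y -> gconv rho (x * y).
Proof. move=> Hx Hy. exact: (proj1 (cprod_conv _ _ rho Hr Hx Hy)). Qed.
Lemma gconv_0 : gconv rho 0.
Proof. apply: (fin_conv _ 0 rho Hr) => //. Qed.
Lemma geval_add x y s : gconv rho x -> gconv rho y -> (Rlt (Cnorm2 s) (Rmult rho rho)) ->
  geval (x + y) s = geval x s + geval y s.
Proof. move=> Hx Hy Hs. exact: (proj2 (cadd_conv _ _ rho Hr Hx Hy) s Hs). Qed.
Lemma geval_mul x y s : gconv rho x -> gconv rho y -> (Rlt (Cnorm2 s) (Rmult rho rho)) ->
  geval (x * y) s = geval x s * geval y s.
Proof. move=> Hx Hy Hs. exact: (proj2 (cprod_conv _ _ rho Hr Hx Hy) s Hs). Qed.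
Lemma geval_0 s : geval 0 s = 0.
Proof. rewrite /geval (fin_eval _ 0) //. Qed.

Lemma gconv_sum n (F : 'I_n -> G) : (forall j, gconv rho (F j)) -> gconv rho (\sum_(j < n) F j).
Proof. elim: n F => [|n IH] F HF; first by rewrite big_ord0; exact: gconv_0.
  rewrite big_ord_recr /=. apply: gconv_add => //. apply: IH => j. exact: HF. Qed.
Lemma geval_sum n (F : 'I_n -> G) s : (forall j, gconv rho (F j)) -> (Rlt (Cnorm2 s) (Rmult rho rho)) ->
  geval (\sum_(j < n) F j) s = \sum_(j < n) geval (F j) s.
Proof. elim: n F => [|n IH] F HF Hs; first by rewrite !big_ord0 geval_0.
  rewrite !big_ord_recr /= geval_add //. by rewrite IH. apply: gconv_sum => j; exact: HF. Qed.
End Eval.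

Lemma gv_sum n (F : 'I_n -> G) m : gv (\sum_(j < n) F j) m = \sum_(j < n) gv (F j) m.
Proof. elim: n F => [|n IH] F; first by rewrite !big_ord0.
  rewrite !big_ord_recr gvD /cadd IH. by []. Qed.

Lemma csum_exchange n k (f : nat -> nat -> Cplx) :
  csum n (fun l => csum k (fun j => f l j)) = csum k (fun j => csum n (fun l => f l j)).
Proof. rewrite !csum_big. under eq_bigr do rewrite csum_big. rewrite exchange_big /=.
  apply: eq_bigr => j _. by rewrite csum_big. Qed.

Definition Dg (d : nat -> nat -> nat -> nat -> Cplx) k i j : G := mkG (fun m => d k m i j).

Lemma dgerm_G r d k (F : nat -> G) m i :
  (forall j, (j < r k)%N -> is_germ (fun m => d k m i j)) ->
  dgerm r d k (fun m j => gv (F j) m) m i = gv (\sum_(j < r k) Dg d k i j * F j) m.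
Proof.
  move=> H. rewrite gv_sum /dgerm csum_exchange csum_big. apply: eq_bigr => j _.
  rewrite gvM /Dg gv_mkG; last exact: H. by [].
Qed.
Set Implicit Arguments. Unset Strict Implicit. Unset Printing Implicit Defensive.
Import GRing.Theory.
Open Scope ring_scope.

Lemma G_zero_of_eval (X : G) rho : Rlt 0 rho -> gconv rho X ->
  (forall x, Rlt 0 x -> Rlt x rho -> geval X (x, R0) = 0) -> X = 0.
Proof.
  move=> Hr Hc H. apply: G_ext. apply: functional_extensionality => m. rewrite gv0.
  apply: NNPP => Hm. have [x [[Hx1 Hx2] [Hx3 Hx4]]] := identity_thm (gv X) rho Hr Hc (ex_intro _ m Hm) rho Hr.
  apply: Hx4. exact: H.
Qed.

Lemma G_nz_coef (X : G) : X != 0 -> exists m, gv X m <> C0.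
Proof. move=> H. apply: NNPP => Hn. move/eqP: H; apply. apply: G_ext. apply: functional_extensionality => m.
  rewrite gv0. apply: NNPP => Hm. apply: Hn. by exists m. Qed.

Definition tG : G := mkG (tn 1).
Lemma gv_tG : gv tG = tn 1. Proof. apply: gv_mkG. exact: germ_tn. Qed.

Lemma cprod_tn1 b m : cprod (tn 1) b m = match m with O => C0 | S m' => b m' end.
Proof. rewrite cprod_big. case: m => [|m].
  - by rewrite big_ord_recl big_ord0 /tn /= mul0r addr0.
  - rewrite big_ord_recl big_ord_recl /= big1 ?addr0.
    + by rewrite /tn /= mul0r mul1r add0r subn1.
    + move=> i _. by rewrite /tn /= mul0r.
Qed.

Lemma tn_succ n : tn n.+1 = cprod (tn 1) (tn n).
Proof. apply: functional_extensionality => m. rewrite cprod_tn1. case: m => [|m] //; by rewrite /tn /=.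
  Qed.

Lemma gv_tGn n : gv (tG ^+ n) = tn n.
Proof. elim: n => [|n IH]; first by rewrite expr0 gv1.
  by rewrite exprS gvM gv_tG IH -tn_succ. Qed.

Lemma tG_neq0 : tG != 0.
Proof. apply/eqP => E. have := f_equal (fun z => gv z 1%N) E. rewrite gv_tG gv0 /tn /=.
  move=> E'. move: C1_neq0. by rewrite E' eqxx. Qed.

Lemma gconv_tGn n rho : Rlt 0 rho -> gconv rho (tG ^+ n).
Proof. move=> Hr. rewrite /gconv gv_tGn. apply: (fin_conv _ n.+1 rho Hr) => m /leP Hm.
  rewrite /tn. case: PeanoNat.Nat.eqb_spec => // E. subst. by rewrite ltnn in Hm. Qed.

Lemma geval_tGn n s : geval (tG ^+ n) s = Cpow s n.
Proof. by rewrite /geval gv_tGn tn_eval. Qed.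

Lemma cprod_low a b na : (forall m, (m < na)%coq_nat -> a m = C0) ->
  (forall k, (k < na)%N -> cprod a b k = C0) /\ cprod a b na = a na * b 0%N.
Proof.
  move=> Ha. split.
  - move=> k Hk. rewrite cprod_big big1 // => [[l Hl]] _ /=. rewrite Ha ?mul0r //.
    apply/ltP. exact: leq_ltn_trans (Hl : (l <= k)%N) Hk.
  - rewrite cprod_big big_ord_recr /= subnn big1 ?add0r // => [[l Hl]] _ /=.
    by rewrite Ha ?mul0r //; apply/ltP.
Qed.

Definition cG (z : Cplx) : G := mkG (cscal z (tn 0)).
Lemma gv_cG z : gv (cG z) = cscal z (tn 0).
Proof. apply: gv_mkG. apply: germ_scal. exact: germ_tn. Qed.
Lemma gv_cG_mul z X m : gv (cG z * X) m = z * gv X m.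
Proof. rewrite gvM gv_cG cprod_big big_ord_recl big1 /=.
  - rewrite addr0 subn0 /cscal /tn /=. by rewrite Cmul_comm Cmul_1l.
  - move=> i _. rewrite /cscal /tn /=. by rewrite Cmul_0r mul0r.
Qed.

Lemma dgerm_ext r d k (a b : nat -> nat -> Cplx) m i :
  (forall m j, (j < r k)%N -> a m j = b m j) -> dgerm r d k a m i = dgerm r d k b m i.
Proof. move=> H. rewrite /dgerm. apply: csum_ext => l _. apply: csum_ext => j /ltP Hj. by rewrite H. Qed.

Definition natv (n : nat) (f : 'I_n -> G) (j : nat) : G :=
  match insub j with Some o => f o | None => 0 end.
Lemma natv_ord n (f : 'I_n -> G) (o : 'I_n) : natv f o = f o.
Proof. by rewrite /natv valK. Qed.
Lemma sum_natv n (f : 'I_n -> G) (F : nat -> G -> G) :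
  \sum_(j < n) F j (natv f j) = \sum_(j < n) F j (f j).
Proof. apply: eq_bigr => j _. by rewrite natv_ord. Qed.
Set Implicit Arguments. Unset Strict Implicit. Unset Printing Implicit Defensive.
Import GRing.Theory.
Open Scope ring_scope.

Section BC.
Variables (N : nat) (RB : R) (r : nat -> nat) (d : nat -> nat -> nat -> nat -> Cplx).
Hypothesis Hbc : is_bounded_complex N RB r d.

Lemma bc_RB : Rlt 0 RB. Proof. by case: Hbc. Qed.

Lemma bc_conv k i j : (i < r k.+1)%N -> (j < r k)%N -> ps_conv_on (fun m => d k m i j) RB.
Proof. move=> Hi Hj. case: Hbc => _ [_ [H _]]. apply: H; by apply/ltP. Qed.

Lemma bc_germ k i j : (i < r k.+1)%N -> (j < r k)%N -> is_germ (fun m => d k m i j).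
Proof. move=> Hi Hj. exists RB. split; [exact: bc_RB | exact: bc_conv]. Qed.

Lemma bc_gconv k i j rho : (i < r k.+1)%N -> (j < r k)%N -> Rlt 0 rho -> Rle rho RB -> gconv rho (Dg d k i j).
Proof. move=> Hi Hj H1 H2. rewrite /gconv /Dg gv_mkG; last exact: bc_germ.
  apply: (conv_mono _ RB); first exact: bc_conv. by split. Qed.

Lemma bc_geval k i j s : (i < r k.+1)%N -> (j < r k)%N -> geval (Dg d k i j) s = ps_eval (fun m => d k m i j) s.
Proof. move=> Hi Hj. by rewrite /geval /Dg gv_mkG //; exact: bc_germ. Qed.

Lemma fibre_G k s x i : (i < r k.+1)%N ->
  fibre_apply r d k s x i = \sum_(j < r k) geval (Dg d k i j) s * x j.
Proof. move=> Hi. rewrite /fibre_apply csum_big. apply: eq_bigr => j _. by rewrite bc_geval. Qed.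

Lemma bc_dd k i l : (i < r k.+2)%N -> (l < r k)%N ->
  \sum_(j < r k.+1) Dg d k.+1 i j * Dg d k j l = 0.
Proof.
  move=> Hi Hl. have HR := bc_RB.
  have Hc : forall j : 'I_(r k.+1), gconv RB (Dg d k.+1 i j * Dg d k j l).
  { move=> j. apply: gconv_mul => //; apply: bc_gconv => //; exact: Rle_refl. }
  apply: (G_zero_of_eval HR); first exact: gconv_sum.
  move=> x Hx1 Hx2. have Hs : Rlt (Cnorm2 (x, R0)) (Rmult RB RB).
  { exact: norm_real_lt. }
  rewrite (geval_sum HR) //. case: Hbc => _ [_ [_ Hdd]].
  have := Hdd k (x, R0) Hs i l (elimTF ltP Hi) (elimTF ltP Hl). rewrite csum_big => E.
  apply: (etrans _ E).
  apply: eq_bigr => j _. rewrite (geval_mul HR); try apply: bc_gconv => //; try exact: Rle_refl.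
  rewrite !bc_geval //. exact: Hs.
Qed.
End BC.
Set Implicit Arguments. Unset Strict Implicit. Unset Printing Implicit Defensive.
Import GRing.Theory.
Open Scope ring_scope.

Lemma dgerm_eta r d q X0 n0 m i : (m <= n0)%N ->
  dgerm r d q (fun m j => if Nat.eqb m n0 then X0 j else C0) m i =
  if Nat.eqb m n0 then d0_apply r d q X0 i else C0.
Proof.
  move=> Hm. rewrite /dgerm csum_shift1 [csum m _]csum_zero.
  - rewrite Cadd_0r PeanoNat.Nat.sub_0_r. case: PeanoNat.Nat.eqb_spec => E.
    + by rewrite /d0_apply.
    + apply: csum_zero => j _. by rewrite Cmul_0r.
  - move=> l /ltP Hl. apply: csum_zero => j _. case: PeanoNat.Nat.eqb_spec => E.
    + exfalso. move/leP: Hm. move/ltP: Hl. lia.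
    + by rewrite Cmul_0r.
Qed.

Lemma gconv_mono rho rho' x : gconv rho x -> Rlt 0 rho' -> Rle rho' rho -> gconv rho' x.
Proof. move=> H H1 H2. exact: (conv_mono _ rho _ H (conj H1 H2)). Qed.

Section Hard.
Variables (N : nat) (RB : R) (r : nat -> nat) (d : nat -> nat -> nat -> nat -> Cplx).
Hypothesis Hbc : is_bounded_complex N RB r d.
Variables (q : nat) (beta : nat -> Cplx).

Lemma hard_dir : second_class_obstructed RB r d q beta ->
  exists n : nat, (1 <= n)%coq_nat /\
     exists alpha : nat -> nat -> Cplx,
       is_germ_vec (r q) alpha /\ trunc_cocycle r d q n alpha /\
       Htrunc_eq r d q n (o_ni_rep r d q n (n - 1) alpha) (rho_rep (n - 1) beta).
Proof.
  case=> rho [Hr [HrRB [bt [Hbt [Hdbt [Hk0 [Heq Hex]]]]]]].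
  set p := r q.+1. set k := r q.
  have Hbg : forall i, (i < p)%N -> is_germ (fun m => bt m i).
  { move=> i Hi. exists rho. split => //. apply: Hbt. exact/ltP. }
  pose b (i : 'I_p) : G := mkG (fun m => bt m i).
  have gvb : forall i : 'I_p, gv (b i) = fun m => bt m i by move=> i; rewrite gv_mkG //; exact: Hbg.
  have Hbc' : forall i : 'I_p, gconv rho (b i) by move=> i; rewrite /gconv gvb; apply: Hbt; exact/ltP.
  pose D : 'M[G]_(p, k) := \matrix_(i, j) Dg d q i j.
  pose bv : 'cV[G]_p := \col_i b i.
  case: (dichotomy D bv) => [[y [c [Hc Hy]]] | [w [Hw Hwb]]].
  -
    have [n0 [Hcn0 Hclow]] := G_nz Hc.
    pose kap := cG (Cinv (gv c n0)).
    pose yn := natv (fun j => y j 0).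
    pose alpha := fun m j => gv (tG * kap * yn j) m.
    have Hdg : forall i m, (i < p)%N -> dgerm r d q alpha m i =
        match m with O => C0 | S m' => Cinv (gv c n0) * cprod (gv c) (bt^~ i) m' end.
    { move=> i m Hi.
      rewrite (@dgerm_G r d q (fun j => tG * kap * yn j) m i); last by move=> j Hj; exact: (bc_germ Hbc).
      have E : \sum_(j < k) Dg d q i j * (tG * kap * yn j) = tG * kap * (c * b (Ordinal Hi)).
      { transitivity (tG * kap * \sum_(j < k) Dg d q i j * yn j).
        { rewrite mulr_sumr. apply: eq_bigr => j _. by rewrite mulrCA. }
        congr (_ * _).
        have := congr1 (fun M : 'cV[G]_p => M (Ordinal Hi) 0) Hy. rewrite !mxE => <-.
        apply: eq_bigr => j _. by rewrite mxE /yn natv_ord. }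
      rewrite E -mulrA gvM gv_tG cprod_tn1. case: m => [|m'] //.
      by rewrite gv_cG_mul gvM gvb. }
    exists n0.+1. split; first by apply/leP.
    exists alpha. split; [| split].
    + move=> j Hj. exact: gvP.
    + move=> m i Hm Hi. rewrite Hdg; last exact/ltP. case: m Hm => [|m'] Hm //.
      rewrite (proj1 (cprod_low (bt^~ i) Hclow) m'); first by rewrite mulr0.
      move: Hm => /ltP. by rewrite ltnS.
    + have [X0 HX0] := Heq. exists (fun m j => if Nat.eqb m n0 then X0 j else C0). split.
      * move=> j _. apply: (germ_fin _ n0.+1) => m /leP Hm. case: PeanoNat.Nat.eqb_spec => // E.
        subst m. by rewrite ltnn in Hm.
      * move=> m i Hm Hi. have E1 : (n0.+1 - 1)%N = n0 by rewrite subn1.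
        rewrite E1.
        rewrite /o_ni_rep /rho_rep /obs_rep dgerm_eta; last by move: Hm => /ltP; rewrite ltnS.
        case: PeanoNat.Nat.eqb_spec => E.
        -- subst m. rewrite Hdg; last exact/ltP.
           rewrite (proj2 (cprod_low (bt^~ i) Hclow)) mulrA.
           have -> : Cinv (gv c n0) * gv c n0 = 1 := Cinv_l _ Hcn0.
           rewrite mul1r. exact: HX0 i Hi.
        -- exact: Csub_00.
  -
    exfalso.
    have [rw [Hrw Hcw]] : exists rw, Rlt 0 rw /\ forall i, (i < p)%coq_nat -> forall Hi : (i < p)%N, gconv rw (w 0 (Ordinal Hi)).
    { apply: (common_radius p (fun i rr => forall Hi : (i < p)%N, gconv rr (w 0 (Ordinal Hi)))).
      - move=> i r1 r2 H [H1 H2] Hi. exact: (gconv_mono (H Hi) H1 H2).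
      - move=> i /ltP Hi. have [r0 [Hr0 H0]] := gvP (w 0 (Ordinal Hi)). exists r0. split => // Hi'.
        have -> : Ordinal Hi' = Ordinal Hi by apply: val_inj. exact: H0. }
    have Hcw' : forall i : 'I_p, gconv rw (w 0 i).
    { move=> [i Hi]. apply: Hcw => //. exact/ltP. }
    pose r1 := Rmin rw rho.
    have Hr1 : Rlt 0 r1 by apply: Rmin_pos.
    have Hr1a : Rle r1 rw := Rmin_l _ _. have Hr1b : Rle r1 rho := Rmin_r _ _.
    have Hr1c : Rle r1 RB := Rle_trans _ _ _ Hr1b HrRB.
    pose g := (w *m bv) 0 0.
    have Hg : g != 0.
    { apply: contra Hwb => /eqP Hg0. apply/eqP/matrixP => a e. by rewrite (ord1 a) (ord1 e) [RHS]mxE. }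
    have Hgs : g = \sum_(i < p) w 0 i * b i by rewrite /g mxE; apply: eq_bigr => i _; rewrite mxE.
    have Hci : forall i : 'I_p, gconv r1 (w 0 i * b i).
    { move=> i. apply: (gconv_mul Hr1); [exact: (gconv_mono (Hcw' i)) | exact: (gconv_mono (Hbc' i))]. }
    have Hgc : gconv r1 g by rewrite Hgs; apply: (gconv_sum Hr1).
    have [m Hm] := G_nz_coef Hg.
    have [x [[Hx1 Hx2] [Hx3 Hx4]]] := identity_thm (gv g) r1 Hr1 Hgc (ex_intro _ m Hm) r1 Hr1.
    apply: Hx4.
    have Hs : Rlt (Cnorm2 (x, R0)) (Rmult rho rho) := norm_real_lt x rho Hx1 (Rlt_le_trans _ _ _ Hx2 Hr1b).
    have Hs1 : Rlt (Cnorm2 (x, R0)) (Rmult r1 r1) := norm_real_lt x r1 Hx1 Hx2.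
    have [X HX] := Hex (x, R0) (norm_real_pos x Hx1) Hs.
    have Hdc : forall (i : 'I_p) (j : 'I_k), gconv r1 (Dg d q i j).
    { move=> i j. exact: (bc_gconv Hbc). }
    change (geval g (x, R0) = C0).
    rewrite Hgs (geval_sum Hr1) //.
    transitivity (\sum_(i < p) \sum_(j < k) geval (w 0 i) (x, R0) * (geval (Dg d q i j) (x, R0) * X j)).
    { apply: eq_bigr => i _. rewrite (geval_mul Hr1) //; try exact: (gconv_mono (Hcw' i)); try exact: (gconv_mono (Hbc' i)).
      rewrite {2}/geval gvb HX; last exact/ltP. rewrite (fibre_G Hbc) //. by rewrite mulr_sumr. }
    rewrite exchange_big /=.
    transitivity (\sum_(j < k) geval ((w *m D) 0 j) (x, R0) * X j).
    { apply: eq_bigr => j _. rewrite mxE (geval_sum Hr1) //.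
      - rewrite mulr_suml. apply: eq_bigr => i _. rewrite mxE (geval_mul Hr1) //.
        + by rewrite mulrA.
        + exact: (gconv_mono (Hcw' i)).
      - move=> i. rewrite mxE. apply: (gconv_mul Hr1) => //. exact: (gconv_mono (Hcw' i)). }
    rewrite Hw. rewrite big1 // => j _. by rewrite mxE geval_0 mul0r.
Qed.
End Hard.
Set Implicit Arguments. Unset Strict Implicit. Unset Printing Implicit Defensive.
Import GRing.Theory.
Open Scope ring_scope.

Lemma gvB (x y : G) m : gv (x - y) m = Csub (gv x m) (gv y m). Proof. by []. Qed.

Section Easy.
Variables (N : nat) (RB : R) (r : nat -> nat) (d : nat -> nat -> nat -> nat -> Cplx).
Hypothesis Hbc : is_bounded_complex N RB r d.
Variables (q : nat) (beta : nat -> Cplx).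

Lemma easy_dir : ker0 r d (S q) beta ->
  (exists n : nat, (1 <= n)%coq_nat /\
     exists alpha : nat -> nat -> Cplx,
       is_germ_vec (r q) alpha /\ trunc_cocycle r d q n alpha /\
       Htrunc_eq r d q n (o_ni_rep r d q n (n - 1) alpha) (rho_rep (n - 1) beta)) ->
  second_class_obstructed RB r d q beta.
Proof.
  move=> Hker [n [Hn [alpha [Hag [Htc [eta [Heg Heta]]]]]]].
  set p := r q.+1. set k := r q.
  pose A (j : nat) : G := mkG (fun m => alpha m j).
  pose E (j : nat) : G := mkG (fun m => eta m j).
  have gvA : forall j, (j < k)%N -> gv (A j) = fun m => alpha m j.
  { move=> j Hj. apply: gv_mkG. apply: Hag. exact/ltP. }
  have gvE : forall j, (j < k)%N -> gv (E j) = fun m => eta m j.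
  { move=> j Hj. apply: gv_mkG. apply: Heg. exact/ltP. }
  pose A2 (j : nat) : G := A j - tG * E j.
  pose Y (i : nat) : G := \sum_(j < k) Dg d q i j * A2 j.
  have HY : forall i m, (i < p)%N -> gv (Y i) m =
     Csub (dgerm r d q alpha m i) (match m with O => C0 | S m' => dgerm r d q eta m' i end).
  { move=> i m Hi.
    have -> : Y i = \sum_(j < k) Dg d q i j * A j - tG * \sum_(j < k) Dg d q i j * E j.
    { rewrite /Y mulr_sumr -sumrB. apply: eq_bigr => j _. by rewrite /A2 mulrBr mulrCA. }
    rewrite gvB -(@dgerm_G r d q A m i); last by move=> j Hj; exact: (bc_germ Hbc).
    rewrite gvM gv_tG cprod_tn1. rewrite (@dgerm_ext r d q alpha (fun m j => gv (A j) m)); last first.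
    { move=> m0 j Hj. by rewrite gvA. }
    congr Csub. case: m => [|m'] //. rewrite -(@dgerm_G r d q E m' i); last by move=> j Hj; exact: (bc_germ Hbc).
    apply: dgerm_ext => m0 j Hj. by rewrite gvE. }
  have HY0 : forall i m, (i < p)%N -> (m < n)%N -> gv (Y i) m = C0.
  { move=> i m Hi Hm. rewrite HY // Htc; [|exact/ltP|exact/ltP]. case: m Hm => [|m'] Hm; first exact: Csub_00.
    have := Heta m' i (elimTF ltP (ltnW Hm)) (elimTF ltP Hi). rewrite /o_ni_rep /rho_rep.
    case: PeanoNat.Nat.eqb_spec => [Ee|_]; first by exfalso; move/ltP: Hm; unfold subn in Ee; lia.
    by move=> <-; rewrite !Csub_00. }
  have HYn : forall i, (i < p)%N -> gv (Y i) n = beta i.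
  { move=> i Hi. rewrite HY //. have [n' En] : exists n', n = n'.+1.
    { exists n.-1. rewrite prednK //. by apply/leP. }
    move: Heta. rewrite En => Heta.
    have := Heta n' i (elimTF ltP (ltnSn n')) (elimTF ltP Hi). rewrite /o_ni_rep /rho_rep /obs_rep.
    have E1 : (n'.+1 - 1)%N = n' by rewrite subn1.
    rewrite E1 PeanoNat.Nat.eqb_refl => <-. exact: Csub_Csub. }
  pose B (i : nat) : G := mkG (sh n (gv (Y i))).
  have gvB' : forall i, gv (B i) = sh n (gv (Y i)) by move=> i; apply: gv_mkG; apply: germ_sh; exact: gvP.
  have HYB : forall i, (i < p)%N -> Y i = tG ^+ n * B i.
  { move=> i Hi. apply: G_ext. rewrite gvM gv_tGn gvB' cprod_tn //. move=> m /ltP Hm. exact: HY0. }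
  have [rA [HrA HcA]] : exists rr, Rlt 0 rr /\ forall j, (j < k)%coq_nat -> gconv rr (A2 j).
  { apply: common_radius.
    - move=> j r1 r2 H [H1 H2]. exact: (gconv_mono H H1 H2).
    - move=> j _. have [r0 [Hr0 H0]] := gvP (A2 j). by exists r0. }
  have [rB [HrB HcB]] : exists rr, Rlt 0 rr /\ forall i, (i < p)%coq_nat -> gconv rr (B i).
  { apply: common_radius.
    - move=> j r1 r2 H [H1 H2]. exact: (gconv_mono H H1 H2).
    - move=> j _. have [r0 [Hr0 H0]] := gvP (B j). by exists r0. }
  pose rho := Rmin (Rmin rA rB) RB.
  have HRB := bc_RB Hbc.
  have Hr : Rlt 0 rho by apply: Rmin_pos => //; apply: Rmin_pos.
  have HrA' : Rle rho rA := Rle_trans _ _ _ (Rmin_l _ _) (Rmin_l _ _).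
  have HrB' : Rle rho rB := Rle_trans _ _ _ (Rmin_l _ _) (Rmin_r _ _).
  have HrR : Rle rho RB := Rmin_r _ _.
  have cA : forall j : 'I_k, gconv rho (A2 j).
  { move=> j. apply: (gconv_mono (HcA j _)) => //. exact/ltP. }
  have cB : forall i, (i < p)%N -> gconv rho (B i).
  { move=> i Hi. apply: (gconv_mono (HcB i _)) => //. exact/ltP. }
  have cD : forall k' i j, (i < r k'.+1)%N -> (j < r k')%N -> gconv rho (Dg d k' i j).
  { move=> k' i j Hi Hj. exact: (bc_gconv Hbc). }
  exists rho. split => //. split => //. exists (fun m i => gv (B i) m).
  split; [|split; [|split; [|split]]].
  - move=> i Hi. exact: (cB i (introT ltP Hi)).
  - move=> s Hs i Hi. rewrite (fibre_G Hbc); last exact/ltP.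
    have Z : \sum_(j < p) Dg d q.+1 i j * B j = 0.
    { apply: (mulfI (expf_neq0 n tG_neq0)). rewrite mulr0 mulr_sumr.
      transitivity (\sum_(j < p) Dg d q.+1 i j * Y j).
      { apply: eq_bigr => j _. by rewrite HYB // mulrCA. }
      transitivity (\sum_(l < k) (\sum_(j < p) Dg d q.+1 i j * Dg d q j l) * A2 l).
      { rewrite /Y. under eq_bigr do rewrite mulr_sumr. rewrite exchange_big /=.
        apply: eq_bigr => l _. rewrite mulr_suml. apply: eq_bigr => j _. by rewrite mulrA. }
      rewrite big1 // => l _. rewrite (bc_dd Hbc) ?mul0r //. exact/ltP. }
    have EZ := f_equal (fun z => geval z s) Z. simpl in EZ.
    have HcDB : forall j : 'I_p, gconv rho (Dg d q.+1 i j * B j).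
    { move=> j. apply: (gconv_mul Hr); [apply: cD => //; exact/ltP | exact: cB]. }
    rewrite (@geval_sum rho Hr p _ s HcDB Hs) in EZ.
    rewrite geval_0 in EZ. apply: (etrans _ EZ). apply: eq_bigr => j _.
    rewrite (geval_mul Hr) //; [apply: cD => //; exact/ltP | exact: cB].
  - move=> i Hi. rewrite /d0_apply (csum_ext _ (fun j => Cmul (d q.+1 0 i j) (gv (B j) 0)) (fun j => Cmul (d q.+1 0 i j) (beta j))).
    + exact: Hker i Hi.
    + move=> j Hj. by rewrite gvB' /sh /= HYn //; exact/ltP.
  - exists (fun _ => C0). move=> i Hi. rewrite gvB' /sh /= HYn; last exact/ltP.
    rewrite Csub_self /d0_apply csum_zero // => j _. by rewrite Cmul_0r.
  - move=> s Hs0 Hs. exists (fun j => Cmul (Cinv (Cpow s n)) (geval (A2 j) s)). move=> i Hi.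
    rewrite (fibre_G Hbc); last exact/ltP.
    have Hsn : Cpow s n <> C0 := Cpow_neq0 s n (norm_pos_neq0 s Hs0).
    have Hi' : (i < p)%N by exact/ltP.
    have E1 : geval (Y i) s = Cpow s n * geval (B i) s.
    { rewrite HYB // (geval_mul Hr) ?geval_tGn //; [exact: gconv_tGn | exact: cB]. }
    have E2 : geval (Y i) s = \sum_(j < k) geval (Dg d q i j) s * geval (A2 j) s.
    { rewrite /Y (geval_sum Hr) //.
      - apply: eq_bigr => j _. rewrite (geval_mul Hr) //. exact: cD.
      - move=> j. apply: (gconv_mul Hr) => //. exact: cD. }
    transitivity (Cinv (Cpow s n) * geval (Y i) s).
    { rewrite E1 mulrA. have -> : Cinv (Cpow s n) * Cpow s n = 1 := Cinv_l _ Hsn. by rewrite mul1r. }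
    rewrite E2 mulr_sumr. apply: eq_bigr => j _. by rewrite mulrCA.
Qed.
End Easy.

Unset Implicit Arguments.
Close Scope ring_scope.
Open Scope R_scope.

Theorem corollary2p7 (N : nat) (RB : R) (r : nat -> nat)
    (d : nat -> nat -> nat -> nat -> Cplx) (q : nat) (beta : nat -> Cplx) :
  is_bounded_complex N RB r d ->
  (q < N)%coq_nat ->
  ker0 r d (S q) beta -> ~ im0 r d q beta ->
  (second_class_obstructed RB r d q beta <->
   exists n : nat, (1 <= n)%coq_nat /\
     exists alpha : nat -> nat -> Cplx,
       is_germ_vec (r q) alpha /\ trunc_cocycle r d q n alpha /\
       Htrunc_eq r d q n (o_ni_rep r d q n (n - 1) alpha)
                         (rho_rep (n - 1) beta)).
Proof.
  move=> Hbc Hq Hker Hnim. split.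
  - exact: (hard_dir Hbc).
  - exact: (easy_dir Hbc).
Qed.
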